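(* For $m \geq 4$, a fan-crossing free $m$-star has at most $2m-8$ long arrows.
   Context: An $m$-star is a regular $m$-gon $P$ together with a finite set of arrows. Label the vertices of $P$ counter-clockwise $v_1,\dots,v_m$ and let $e_i = v_iv_{i+1}$ (indices modulo $m$) be its boundary edges. An arrow is a ray segment starting at a vertex $v_i$ of $P$, pointing into the interior of $P$, and ending where it exits $P$ through (the relative interior of) a boundary edge $e_j$ not incident to $v_i$; several arrows may start at the same vertex. Two elements among the boundary edges and arrows intersect if they share a point other than a common endpoint vertex; in particular an arrow intersects the edge through which it exits. An element is incident to a vertex $v$ if $v$ is one of its endpoints (an arrow is incident only to its starting vertex). The $m$-star is ($2$-)fan-crossing free if no edge or arrow intersects two elements (arrows or edges) that are incident to the same vertex. An arrow starting at $v_i$ and exiting through $e_j$ splits the boundary of $P$ into the two chains $v_{i+1},\dots,v_j$ and $v_{j+1},\dots,v_{i-1}$; its length is the number of vertices on the shorter of these chains. An arrow is short if its length is one and long if its length is larger than one. *)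

(* Defs.v *)
From Stdlib Require Import Reals Lra Lia List Arith.
Open Scope R_scope.

(* Vertices indexed 0..m-1 (the paper's v_1..v_m), counter-clockwise on the unit circle. *)
Definition vx (m k : nat) : R := cos (2 * PI * INR k / INR m).
Definition vy (m k : nat) : R := sin (2 * PI * INR k / INR m).

Definition on_seg (ax ay bx by_ px py : R) : Prop :=
  exists t : R, 0 <= t <= 1 /\ px = ax + t * (bx - ax) /\ py = ay + t * (by_ - ay).

(* An arrow: starts at vertex a_src, exits through the relative interior of
   edge e_{a_edge} = v_{a_edge} v_{a_edge+1 mod m} at parameter a_par in (0,1). *)
Record arrow : Type := mkArrow { a_src : nat; a_edge : nat; a_par : R }.

Definition succ_mod (m k : nat) : nat := Nat.modulo (S k) m.

Definition exit_x (m : nat) (a : arrow) : R :=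
  vx m (a_edge a) + a_par a * (vx m (succ_mod m (a_edge a)) - vx m (a_edge a)).
Definition exit_y (m : nat) (a : arrow) : R :=
  vy m (a_edge a) + a_par a * (vy m (succ_mod m (a_edge a)) - vy m (a_edge a)).

Definition valid_arrow (m : nat) (a : arrow) : Prop :=
  (a_src a < m)%nat /\ (a_edge a < m)%nat /\ 0 < a_par a < 1 /\
  a_edge a <> a_src a /\ succ_mod m (a_edge a) <> a_src a.

Inductive elem : Type := Edge (k : nat) | Arr (a : arrow).

Definition is_elem (m : nat) (A : list arrow) (X : elem) : Prop :=
  match X with Edge k => (k < m)%nat | Arr a => In a A end.

Definition incident (m : nat) (X : elem) (v : nat) : Prop :=
  match X with
  | Edge k => v = k \/ v = succ_mod m k
  | Arr a => v = a_src a
  end.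

Definition on_elem (m : nat) (X : elem) (px py : R) : Prop :=
  match X with
  | Edge k => on_seg (vx m k) (vy m k) (vx m (succ_mod m k)) (vy m (succ_mod m k)) px py
  | Arr a => on_seg (vx m (a_src a)) (vy m (a_src a)) (exit_x m a) (exit_y m a) px py
  end.

Definition intersects (m : nat) (X Y : elem) : Prop :=
  X <> Y /\
  exists px py : R, on_elem m X px py /\ on_elem m Y px py /\
    ~ (exists v : nat, (v < m)%nat /\ px = vx m v /\ py = vy m v /\
                       incident m X v /\ incident m Y v).

Definition is_star (m : nat) (A : list arrow) : Prop :=
  NoDup A /\ Forall (valid_arrow m) A.

Definition fan_crossing_free (m : nat) (A : list arrow) : Prop :=
  forall (X Y Z : elem) (v : nat),
    is_elem m A X -> is_elem m A Y -> is_elem m A Z -> Y <> Z -> (v < m)%nat ->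
    incident m Y v -> incident m Z v ->
    ~ (intersects m X Y /\ intersects m X Z).

(* length: vertices on the shorter chain v_{i+1..j} / v_{j+1..i-1} *)
Definition arrow_length (m : nat) (a : arrow) : nat :=
  let d := Nat.modulo (a_edge a + m - a_src a) m in
  Nat.min d (m - 1 - d).

Definition is_long (m : nat) (a : arrow) : bool := Nat.ltb 1 (arrow_length m a).

(* Main.v *)
Require Import Defs.
From Stdlib Require Import Reals Lra Lia List Arith Bool Classical.
Import ListNotations.
Open Scope nat_scope.

Definition btw (a b c : nat) : Prop := (a < b /\ b < c) \/ (b < c /\ c < a) \/ (c < a /\ a < b).
Definition btwb (a b c : nat) : bool :=
  ((a <? b) && (b <? c)) || ((b <? c) && (c <? a)) || ((c <? a) && (a <? b)).
Lemma btwb_iff a b c : btwb a b c = true <-> btw a b c.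
Proof. unfold btwb, btw. rewrite !orb_true_iff, !andb_true_iff, !Nat.ltb_lt. tauto. Qed.
Lemma btwb_false a b c : btwb a b c = false <-> ~ btw a b c.
Proof. rewrite <- btwb_iff. destruct (btwb a b c); split; congruence. Qed.

Definition cnt (V : list nat) a c := length (filter (fun v => btwb a v c) V).

Lemma filter_len_mono {T} (f g : T -> bool) l :
  (forall x, In x l -> f x = true -> g x = true) -> length (filter f l) <= length (filter g l).
Proof.
  induction l as [|h l IH]; simpl; intros H; auto.
  assert (IH' := IH (fun x Hx => H x (or_intror Hx))).
  destruct (f h) eqn:Ef.
  - rewrite (H h (or_introl eq_refl) Ef). simpl. lia.
  - destruct (g h); simpl; lia.
Qed.

Lemma filter_len_lt {T} (f g : T -> bool) l :
  (forall x, In x l -> f x = true -> g x = true) ->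
  (exists x, In x l /\ g x = true /\ f x = false) -> length (filter f l) < length (filter g l).
Proof.
  induction l as [|h l IH]; simpl; intros H [x [Hx [Gx Fx]]]; [contradiction|].
  destruct Hx as [<-|Hx].
  - rewrite Fx, Gx. simpl.
    assert (length (filter f l) <= length (filter g l)) by (apply filter_len_mono; auto).
    lia.
  - assert (IH' := IH (fun y Hy => H y (or_intror Hy)) (ex_intro _ x (conj Hx (conj Gx Fx)))).
    destruct (f h) eqn:Ef.
    + rewrite (H h (or_introl eq_refl) Ef). simpl. lia.
    + destruct (g h); simpl; lia.
Qed.

Lemma filter_len_pos {T} (f : T -> bool) l x : In x l -> f x = true -> 1 <= length (filter f l).
Proof.
  intros Hx Fx. assert (In x (filter f l)) by (apply filter_In; auto).
  destruct (filter f l); simpl in *; [contradiction|lia].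
Qed.

Lemma filter_len_pos_inv {T} (f : T -> bool) l : 1 <= length (filter f l) -> exists x, In x l /\ f x = true.
Proof.
  intros H. destruct (filter f l) as [|y r] eqn:E; simpl in H; [lia|].
  exists y. apply filter_In. rewrite E. simpl; auto.
Qed.

Lemma len_two {T} (m : list T) x y : In x m -> In y m -> x <> y -> 2 <= length m.
Proof.
  destruct m as [|a [|b m]]; simpl; intros Hx Hy Hxy; try contradiction; try lia.
  destruct Hx as [<-|[]]; destruct Hy as [<-|[]]; congruence.
Qed.

Lemma filter_len_two {T} (f : T -> bool) l x y :
  In x l -> In y l -> x <> y -> f x = true -> f y = true -> 2 <= length (filter f l).
Proof.
  intros. apply (len_two _ x y); auto; apply filter_In; auto.
Qed.

Lemma cnt_pos V a c v : In v V -> btw a v c -> 1 <= cnt V a c.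
Proof. intros. unfold cnt. apply (filter_len_pos _ _ v); auto. apply btwb_iff; auto. Qed.

Lemma cnt_pos_inv V a c : 1 <= cnt V a c -> exists v, In v V /\ btw a v c.
Proof. intros H. destruct (filter_len_pos_inv _ _ H) as [v [Hv Hb]]. exists v. split; auto. apply btwb_iff; auto. Qed.

Lemma cnt_zero V a c v : cnt V a c = 0 -> In v V -> ~ btw a v c.
Proof. intros H Hv Hb. assert (1 <= cnt V a c) by (eapply cnt_pos; eauto). lia. Qed.

Lemma cnt_mono V a c a' c' : (forall v, btw a v c -> btw a' v c') -> cnt V a c <= cnt V a' c'.
Proof.
  intros H. unfold cnt. apply filter_len_mono. intros v _ Hv. apply btwb_iff. apply H. apply btwb_iff; auto.
Qed.

Lemma cnt_lt_l V a b w : In w V -> btw a w b -> cnt V a w < cnt V a b.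
Proof.
  intros Hw Hb. unfold cnt. apply filter_len_lt.
  - intros v _ Hv. apply btwb_iff. apply btwb_iff in Hv. unfold btw in *; lia.
  - exists w. split; auto. split. apply btwb_iff; auto. apply btwb_false. unfold btw; lia.
Qed.

Lemma cnt_lt_r V a b w : In w V -> btw a w b -> cnt V w b < cnt V a b.
Proof.
  intros Hw Hb. unfold cnt. apply filter_len_lt.
  - intros v _ Hv. apply btwb_iff. apply btwb_iff in Hv. unfold btw in *; lia.
  - exists w. split; auto. split. apply btwb_iff; auto. apply btwb_false. unfold btw; lia.
Qed.

Lemma succ_exists V a b : 1 <= cnt V a b -> exists w, In w V /\ btw a w b /\ cnt V a w = 0.
Proof.
  remember (cnt V a b) as k eqn:Ek. revert b Ek.
  induction k as [k IH] using lt_wf_ind. intros b Ek Hk.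
  destruct (cnt_pos_inv V a b ltac:(lia)) as [w0 [Hw0 Hb0]].
  destruct (Nat.eq_dec (cnt V a w0) 0) as [E0|E0].
  - exists w0; auto.
  - assert (Hlt := cnt_lt_l V a b w0 Hw0 Hb0).
    destruct (IH (cnt V a w0) ltac:(lia) w0 eq_refl ltac:(lia)) as [w [Hw [Hbw Hc]]].
    exists w. repeat split; auto. unfold btw in *; lia.
Qed.

Lemma pred_exists V a b : 1 <= cnt V a b -> exists w, In w V /\ btw a w b /\ cnt V w b = 0.
Proof.
  remember (cnt V a b) as k eqn:Ek. revert a Ek.
  induction k as [k IH] using lt_wf_ind. intros a Ek Hk.
  destruct (cnt_pos_inv V a b ltac:(lia)) as [w0 [Hw0 Hb0]].
  destruct (Nat.eq_dec (cnt V w0 b) 0) as [E0|E0].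
  - exists w0; auto.
  - assert (Hlt := cnt_lt_r V a b w0 Hw0 Hb0).
    destruct (IH (cnt V w0 b) ltac:(lia) w0 eq_refl ltac:(lia)) as [w [Hw [Hbw Hc]]].
    exists w. repeat split; auto. unfold btw in *; lia.
Qed.
Notation arr := (nat * nat)%type.
Definition inter (p q : arr) : Prop :=
  snd p = snd q \/ (btw (fst p) (fst q) (snd p) /\ btw (snd p) (snd q) (fst p))
  \/ (btw (fst p) (snd q) (snd p) /\ btw (snd p) (fst q) (fst p)).
Definition longb (V : list nat) (p : arr) : bool :=
  (2 <=? cnt V (fst p) (snd p)) && (2 <=? cnt V (snd p) (fst p)).

Definition Star (V : list nat) (A : list arr) : Prop :=
  NoDup V /\ NoDup A /\
  (forall b, In b A -> In (fst b) V /\ 1 <= snd b /\ ~ In (snd b) V) /\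
  (forall b c, In b A -> In c A -> snd b = snd c \/ snd b + 2 < snd c \/ snd c + 2 < snd b) /\
  (forall b c, In b A -> In c A -> b <> c -> fst b = fst c -> 1 <= cnt V (snd b) (snd c)) /\
  (forall b c, In b A -> In c A -> b <> c -> inter b c -> 1 <= cnt V (snd b) (fst c) /\ 1 <= cnt V (fst c) (snd b)) /\
  (forall b c d, In b A -> In c A -> In d A -> b <> c -> b <> d -> c <> d -> fst c = fst d -> inter b c -> inter b d -> False).

Lemma longb_iff V p : longb V p = true <-> 2 <= cnt V (fst p) (snd p) /\ 2 <= cnt V (snd p) (fst p).
Proof. unfold longb. rewrite andb_true_iff, !Nat.leb_le. tauto. Qed.

Lemma notin_neq (V : list nat) v p : In v V -> ~ In p V -> v <> p.
Proof. intros H1 H2 E. subst. contradiction. Qed.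

Lemma next_uniq V u v w : In v V -> In w V -> v <> u -> w <> u -> cnt V u v = 0 -> cnt V u w = 0 -> v = w.
Proof.
  intros Hv Hw Hvu Hwu Cv Cw. destruct (Nat.eq_dec v w) as [|Hne]; auto. exfalso.
  assert (btw u v w \/ btw u w v) as [H|H] by (unfold btw; lia).
  - eapply cnt_zero; [exact Cw| exact Hv| exact H].
  - eapply cnt_zero; [exact Cv| exact Hw| exact H].
Qed.

Lemma prev_uniq V u v w : In v V -> In w V -> v <> u -> w <> u -> cnt V v u = 0 -> cnt V w u = 0 -> v = w.
Proof.
  intros Hv Hw Hvu Hwu Cv Cw. destruct (Nat.eq_dec v w) as [|Hne]; auto. exfalso.
  assert (btw v w u \/ btw w v u) as [H|H] by (unfold btw; lia).
  - eapply cnt_zero; [exact Cv| exact Hw| exact H].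
  - eapply cnt_zero; [exact Cw| exact Hv| exact H].
Qed.

Lemma next_in_arc V u v w p : In v V -> v <> u -> cnt V u v = 0 -> In w V -> btw u w p -> v <> p -> btw u v p.
Proof.
  intros Hv Hvu C Hw Hb Hvp. destruct (classic (btw u v p)) as [|Hn]; auto. exfalso.
  destruct (Nat.eq_dec w v) as [->|Hwv]; [contradiction|].
  apply (cnt_zero V u v w C Hw). clear - Hb Hn Hwv Hvu Hvp. unfold btw in *; lia.
Qed.


Section Good.
Variables (V : list nat) (A : list arr).
Hypothesis HS : Star V A.

Lemma good_exists : (exists b, In b A /\ longb V b = true) ->
  exists a, In a A /\ longb V a = true /\
   forall c, In c A -> longb V c = true -> fst c <> fst a -> cnt V (fst a) (fst c) = 0 -> ~ inter a c.
Proof.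
  destruct HS as (NV & NA & HA & HSp & HE & HAx & HB).
  intros [a0 [Ha0 La0]]. apply NNPP. intros Hn.
  assert (H : forall a, In a A -> longb V a = true -> exists c, In c A /\ longb V c = true /\ fst c <> fst a /\ cnt V (fst a) (fst c) = 0 /\ inter a c).
  { intros a Ha La. apply NNPP. intros Hn2. apply Hn. exists a. repeat split; auto.
    intros c Hc Lc Hne C0 Hi. apply Hn2. exists c. auto. }
  clear Hn.
  destruct a0 as [s x]. simpl in *.
  destruct (HA _ Ha0) as [Hs [_ Hx]]. simpl in Hs, Hx.
  apply longb_iff in La0. simpl in La0.
  assert (Claim : forall k v, In v V -> btw s v x -> cnt V s v = k ->
     exists c, In c A /\ longb V c = true /\ fst c = v /\ (snd c = x \/ btw x (snd c) s)).
  { intros k. induction k as [k IH] using lt_wf_ind. intros v Hv Hsv Ck.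
    destruct (Nat.eq_dec k 0) as [K0|K0].
    - subst k. destruct (H (s,x) Ha0 (proj2 (longb_iff V (s,x)) La0)) as [c [Hc [Lc [Hne [C0 Hi]]]]].
      simpl in *. destruct (HA _ Hc) as [Hcs [_ Hcx]].
      assert (fst c = v). { eapply next_uniq; eauto. intro; subst; unfold btw in Hsv; lia. }
      exists c. repeat split; auto. subst v.
      destruct Hi as [Hi|[Hi|Hi]]; simpl in Hi; [left; auto|right; tauto|].
      exfalso. clear - Hsv Hi. unfold btw in *; lia.
    - destruct (pred_exists V s v ltac:(lia)) as [u [Hu [Hsu Cuv]]].
      assert (Hlt : cnt V s u < k) by (subst k; apply cnt_lt_l; auto).
      assert (Husx : btw s u x) by (clear - Hsu Hsv; unfold btw in *; lia).
      destruct (IH _ Hlt u Hu Husx eq_refl) as [b [Hb [Lb [Fb Sb]]]].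
      destruct (H b Hb Lb) as [c [Hc [Lc [Hne [C0 Hi]]]]].
      destruct (HA _ Hb) as [Hbs [_ Hbx]]. destruct (HA _ Hc) as [Hcs [_ Hcx]].
      assert (Hvu : v <> u) by (clear - Hsu; unfold btw in *; lia).
      assert (Fc : fst c = v). { rewrite Fb in *. eapply next_uniq; eauto. }
      apply longb_iff in Lb. destruct Lb as [Lb1 Lb2].
      destruct (cnt_pos_inv V (fst b) (snd b) ltac:(lia)) as [w1 [Hw1 Bw1]].
      assert (Hvb : btw u v (snd b)).
      { rewrite Fb in Bw1. eapply next_in_arc; eauto. eapply notin_neq; eauto. }
      assert (Hcloc : snd c = snd b \/ btw (snd b) (snd c) u).
      { destruct Hi as [Hi|[Hi|Hi]]; [left; auto| |]; rewrite Fb, Fc in Hi; right.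
        - tauto.
        - exfalso. clear - Hvb Hi. unfold btw in *; lia. }
      exists c. repeat split; auto.
      destruct (classic (snd c = x \/ btw x (snd c) s)) as [Hok|Hno]; auto. exfalso.
      assert (Hsc : btw s (snd c) u).
      { assert (snd c <> s) by (apply not_eq_sym; eapply notin_neq; eauto).
        clear - Hno Hcloc Sb Husx H0. unfold btw in *; lia. }
      apply longb_iff in Lc. destruct Lc as [Lc1 Lc2].
      destruct (succ_exists V (snd c) (fst c) ltac:(lia)) as [w [Hw [Bw Cw]]].
      rewrite Fc in Bw.
      assert (Hsw : btw s w v) by (clear - Bw Hsc Hsu; unfold btw in *; lia).
      assert (Hlt2 : cnt V s w < k) by (subst k; apply cnt_lt_l; auto).
      assert (Hswx : btw s w x) by (clear - Hsw Hsv; unfold btw in *; lia).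
      destruct (IH _ Hlt2 w Hw Hswx eq_refl) as [d [Hd [Ld [Fd Sd]]]].
      destruct (HA _ Hd) as [Hds [_ Hdx]].
      assert (Hvw : v <> w) by (clear - Bw; unfold btw in *; lia).
      assert (Hcd : c <> d) by (intro; subst; congruence).
      assert (Hicd : inter c d).
      { right; right. rewrite Fc, Fd. split.
        - clear - Sd Hsv Hsc Hsu. unfold btw in *; lia.
        - auto. }
      destruct (HAx c d Hc Hd Hcd Hicd) as [Z1 _]. rewrite Fd in Z1. lia. }
  destruct (pred_exists V s x ltac:(lia)) as [u [Hu [Hsu Cux]]].
  destruct (Claim _ u Hu Hsu eq_refl) as [c [Hc [Lc [Fc Sc]]]].
  destruct (HA _ Hc) as [Hcs [_ Hcx]].
  assert (Hne : (s,x) <> c).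
  { intro Heq; rewrite <- Heq in Fc; simpl in Fc; subst u. clear - Hsu. unfold btw in *; lia. }
  assert (Hi : inter (s,x) c).
  { destruct Sc as [Sc|Sc]; [left; simpl; auto|right; left; simpl; rewrite Fc; auto]. }
  destruct (HAx _ _ Ha0 Hc Hne Hi) as [_ Z]. simpl in Z. rewrite Fc in Z. lia.
Qed.
End Good.
Lemma len_filter_none {T} (f : T -> bool) l : (forall x, In x l -> f x = false) -> length (filter f l) = 0.
Proof. induction l as [|h l IH]; simpl; intros H; auto. rewrite H by auto. auto. Qed.

Lemma len_filter_or {T} (f g : T -> bool) l :
  (forall x, In x l -> f x = true -> g x = true -> False) ->
  length (filter (fun x => f x || g x) l) = length (filter f l) + length (filter g l).
Proof.
  induction l as [|h l IH]; intros H; [reflexivity|].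
  assert (IH' := IH (fun x Hx => H x (or_intror Hx))).
  cbn [filter]. destruct (f h) eqn:F, (g h) eqn:G; cbn [orb length]; try lia.
  exfalso; eapply H; [left; reflexivity| |]; eauto.
Qed.

Lemma len_filter_all {T} (f : T -> bool) l : (forall x, In x l -> f x = true) -> length (filter f l) = length l.
Proof. induction l as [|h l IH]; simpl; intros H; auto. rewrite H by auto. simpl. rewrite IH; auto. Qed.

Lemma len_filter_eq1 (l : list nat) s : NoDup l -> In s l -> length (filter (fun v => v =? s) l) = 1.
Proof.
  induction l as [|h l IH]; simpl; intros N Hs; [contradiction|].
  inversion N as [|x0 l0 Hn N2]; subst.
  destruct (Nat.eqb_spec h s).
  - subst. simpl. f_equal. apply len_filter_none.
    intros v Hv. apply Nat.eqb_neq. intro; subst; contradiction.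
  - destruct Hs as [|Hs]; [congruence|]. auto.
Qed.

Lemma len_filter_ff {T} (f g : T -> bool) l :
  length (filter f (filter g l)) = length (filter (fun x => g x && f x) l).
Proof. induction l as [|h l IH]; simpl; auto. destruct (g h); simpl; auto. destruct (f h); simpl; auto. Qed.

Lemma len_filter_split {T} (P Q Lo : T -> bool) l :
  (forall x, In x l -> P x = true -> Q x = true \/ Lo x = true) ->
  length (filter P l) <= length (filter Q l) + length (filter Lo l).
Proof.
  induction l as [|h l IH]; simpl; intros H; auto.
  assert (IH' := IH (fun x Hx => H x (or_intror Hx))).
  destruct (P h) eqn:Ph.
  - destruct (H h (or_introl eq_refl) Ph) as [E|E]; rewrite E; simpl;
    destruct (Q h), (Lo h); simpl; lia.
  - destruct (Q h), (Lo h); simpl; lia.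
Qed.

Lemma len_le1 {T} (l : list T) : NoDup l -> (forall b c, In b l -> In c l -> b = c) -> length l <= 1.
Proof.
  destruct l as [|a [|b l]]; simpl; intros N H; try lia.
  inversion N as [|x0 l0 Hn N2]; subst. exfalso. apply Hn. left. apply H; simpl; auto.
Qed.

Lemma part_count0 {T} (P fL fR : T -> bool) l :
  (forall b, In b l -> fL b = true \/ fR b = true) ->
  length (filter P l) <= length (filter P (filter fL l)) + length (filter P (filter fR l)).
Proof.
  induction l as [|h l IH]; simpl; intros H; auto.
  assert (IH' := IH (fun x Hx => H x (or_intror Hx))).
  assert (Hh := H h (or_introl eq_refl)).
  destruct (fL h), (fR h); simpl; destruct (P h); simpl; try lia; destruct Hh; congruence.
Qed.

Lemma part_count {T} (a : T) (P fL fR : T -> bool) l : NoDup l ->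
  (forall b, In b l -> b = a \/ fL b = true \/ fR b = true) ->
  length (filter P l) <= 1 + length (filter P (filter fL l)) + length (filter P (filter fR l)).
Proof.
  induction l as [|h l IH]; intros N H; [simpl; lia|]. simpl.
  inversion N as [|x0 l0 Hn N2]; subst.
  destruct (classic (h = a)) as [->|Hne].
  - assert (H' : forall b, In b l -> fL b = true \/ fR b = true).
    { intros b Hb. destruct (H b (or_intror Hb)) as [->|E]; [contradiction|auto]. }
    assert (K := part_count0 P fL fR l H').
    destruct (fL a), (fR a); simpl; destruct (P a); simpl; lia.
  - assert (IH' := IH N2 (fun x Hx => H x (or_intror Hx))).
    assert (Hh := H h (or_introl eq_refl)).
    destruct (fL h), (fR h); simpl; destruct (P h); simpl; try lia; destruct Hh as [Hh|[Hh|Hh]]; congruence.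
Qed.

Lemma cnt_cons_filter W (J : nat -> bool) e p q :
  cnt (e :: filter J W) p q = (if btwb p e q then 1 else 0) + length (filter (fun v => J v && btwb p v q) W).
Proof. unfold cnt. cbn [filter]. destruct (btwb p e q); cbn [length]; rewrite len_filter_ff; lia. Qed.

Lemma cntJ_mono W (J : nat -> bool) e p q p' q' :
  (forall v, In v W -> btw p' v q' -> J v = true /\ btw p v q) -> cnt W p' q' <= cnt (e :: filter J W) p q.
Proof.
  intros H. rewrite cnt_cons_filter. unfold cnt.
  assert (length (filter (fun v => btwb p' v q') W) <= length (filter (fun v => J v && btwb p v q) W)).
  { apply filter_len_mono. intros v Hv Hb. apply btwb_iff in Hb. destruct (H v Hv Hb) as [H1 H2].
    rewrite H1. apply btwb_iff; auto. }
  lia.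
Qed.

Lemma cntJ_pos W (J : nat -> bool) e p q w :
  In w W -> J w = true -> btw p w q -> 1 <= cnt (e :: filter J W) p q.
Proof.
  intros Hw Jw Hb. rewrite cnt_cons_filter.
  assert (1 <= length (filter (fun v => J v && btwb p v q) W)).
  { apply (filter_len_pos _ _ w Hw). rewrite Jw. apply btwb_iff; auto. }
  lia.
Qed.

Lemma cntJ_pos_e W (J : nat -> bool) e p q : btw p e q -> 1 <= cnt (e :: filter J W) p q.
Proof. intros Hb. rewrite cnt_cons_filter. apply btwb_iff in Hb. rewrite Hb. lia. Qed.

Lemma cntJ_two_e W (J : nat -> bool) e p q w :
  In w W -> J w = true -> btw p w q -> btw p e q -> 2 <= cnt (e :: filter J W) p q.
Proof.
  intros Hw Jw Hb He. rewrite cnt_cons_filter.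
  assert (1 <= length (filter (fun v => J v && btwb p v q) W)).
  { apply (filter_len_pos _ _ w Hw). rewrite Jw. apply btwb_iff; auto. }
  apply btwb_iff in He. rewrite He. lia.
Qed.

Lemma cntJ_two W (J : nat -> bool) e p q w1 w2 :
  In w1 W -> In w2 W -> w1 <> w2 -> J w1 = true -> J w2 = true -> btw p w1 q -> btw p w2 q ->
  2 <= cnt (e :: filter J W) p q.
Proof.
  intros H1 H2 Hne J1 J2 B1 B2. rewrite cnt_cons_filter.
  assert (2 <= length (filter (fun v => J v && btwb p v q) W)).
  { apply (filter_len_two _ _ w1 w2); auto; [rewrite J1|rewrite J2]; apply btwb_iff; auto. }
  lia.
Qed.

Lemma inter_sym p q : inter p q -> inter q p.
Proof. unfold inter, btw. intros [H|[H|H]]; [left; auto| |]; right; lia. Qed.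

Lemma cnt_self V p : cnt V p p = 0.
Proof. unfold cnt. apply len_filter_none. intros v _. apply btwb_false. unfold btw; lia. Qed.

Ltac bnorm :=
  repeat match goal with
  | H : ~ (_ \/ _) |- _ => apply not_or_and in H; destruct H
  | H : ~ (_ /\ _) |- _ => apply not_and_or in H
  | H : ~ (_ < _) |- _ => apply Nat.nlt_ge in H
  | H : ~ (_ <= _) |- _ => apply Nat.nle_gt in H
  | H : ~ (@eq nat _ _) |- _ => apply Nat.lt_gt_cases in H
  | H : _ /\ _ |- _ => destruct H
  end.
Ltac clear_disj := repeat match goal with H : _ \/ _ |- _ => clear H end.
Ltac prune := try (exfalso; clear_disj; lia; fail).
Ltac gsearch :=
  match goal with
  | |- _ \/ _ => first [left; gsearch | right; gsearch]
  | |- _ /\ _ => split; gsearch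
  | |- _ => lia
  end.
Ltac bsplit :=
  repeat match goal with
  | H : _ \/ _ |- _ => destruct H as [H|H]; bnorm; prune
  end.
Ltac bsolve := unfold btw in *; bnorm; prune; bsplit; gsearch.
Lemma GEL x xb xc v1 sig :
 (btw 0 sig x \/ (sig = 0 /\ btw 0 xb x)) ->
 (btw 0 sig x \/ (sig = 0 /\ btw 0 xc x)) ->
 ~ ((xb = x \/ btw x xb 0) /\ (xc = x \/ btw x xc 0)) ->
 btw xb v1 xc -> 1 <= xb -> 1 <= xc -> 1 <= x ->
 (xb = x \/ xb + 2 < x \/ x + 2 < xb) -> (xc = x \/ xc + 2 < x \/ x + 2 < xc) -> v1 <> x ->
 xb <> xc ->
 btw xb (x+1) xc \/ (v1 = 0 \/ btw 0 v1 x) \/ btw xb 0 xc.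
Proof. unfold btw; lia. Qed.

Lemma GAL1 x xb sb sc w1 :
 (btw 0 sb x \/ (sb = 0 /\ btw 0 xb x)) -> (btw 0 sc x \/ sc = 0) ->
 ~ (sc = 0 /\ btw x xb 0) -> btw xb w1 sc -> 1 <= xb -> 1 <= x ->
 (xb = x \/ xb + 2 < x \/ x + 2 < xb) -> w1 <> x -> sc <> x -> xb <> sc ->
 btw xb (x+1) sc \/ (w1 = 0 \/ btw 0 w1 x) \/ btw xb 0 sc.
Proof. unfold btw; lia. Qed.

Lemma GAL2 x xb sb sc w2 :
 (btw 0 sb x \/ (sb = 0 /\ btw 0 xb x)) -> (btw 0 sc x \/ sc = 0) ->
 ~ (sc = 0 /\ btw x xb 0) -> btw sc w2 xb -> 1 <= xb -> 1 <= x ->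
 (xb = x \/ xb + 2 < x \/ x + 2 < xb) -> w2 <> x -> sc <> x -> xb <> sc ->
 btw sc (x+1) xb \/ (w2 = 0 \/ btw 0 w2 x) \/ btw sc 0 xb.
Proof. unfold btw; lia. Qed.

Lemma GER x xb xc v1 sig :
 (btw x sig 0 \/ (sig = 0 /\ btw x xb 0)) ->
 (btw x sig 0 \/ (sig = 0 /\ btw x xc 0)) ->
 ~ ((xb = x \/ btw 0 xb x) /\ (xc = x \/ btw 0 xc x)) ->
 btw xb v1 xc -> 1 <= xb -> 1 <= xc -> 2 <= x ->
 (xb = x \/ xb + 2 < x \/ x + 2 < xb) -> (xc = x \/ xc + 2 < x \/ x + 2 < xc) -> v1 <> x ->
 xb <> xc ->
 btw xb (x-1) xc \/ (v1 = 0 \/ btw x v1 0) \/ btw xb 0 xc.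
Proof. unfold btw; lia. Qed.

Lemma GAR1 x xb sb sc w1 :
 (btw x sb 0 \/ (sb = 0 /\ btw x xb 0)) -> (btw x sc 0 \/ sc = 0) ->
 ~ (sc = 0 /\ btw 0 xb x) -> btw xb w1 sc -> 1 <= xb -> 2 <= x ->
 (xb = x \/ xb + 2 < x \/ x + 2 < xb) -> w1 <> x -> sc <> x -> xb <> sc ->
 btw xb (x-1) sc \/ (w1 = 0 \/ btw x w1 0) \/ btw xb 0 sc.
Proof. unfold btw; lia. Qed.

Lemma GAR2 x xb sb sc w2 :
 (btw x sb 0 \/ (sb = 0 /\ btw x xb 0)) -> (btw x sc 0 \/ sc = 0) ->
 ~ (sc = 0 /\ btw 0 xb x) -> btw sc w2 xb -> 1 <= xb -> 2 <= x ->
 (xb = x \/ xb + 2 < x \/ x + 2 < xb) -> w2 <> x -> sc <> x -> xb <> sc ->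
 btw sc (x-1) xb \/ (w2 = 0 \/ btw x w2 0) \/ btw sc 0 xb.
Proof. unfold btw; lia. Qed.
Section Split.
Variables (V : list nat) (A : list arr) (x : nat).
Hypothesis HS : Star V A.
Hypothesis Ha : In (0,x) A.
Hypothesis La : 2 <= cnt V 0 x /\ 2 <= cnt V x 0.
Hypothesis Hgood : forall c, In c A -> longb V c = true -> fst c <> 0 -> cnt V 0 (fst c) = 0 -> ~ inter (0,x) c.

Definition JL (v:nat) : bool := (v =? 0) || btwb 0 v x.
Definition VL := (x+1) :: filter JL V.
Definition inL (b : arr) : bool := btwb 0 (fst b) x || ((fst b =? 0) && btwb 0 (snd b) x).
Definition AL := filter inL A.
Definition JR (v:nat) : bool := (v =? 0) || btwb x v 0.
Definition VR := (x-1) :: filter JR V.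
Definition inR (b : arr) : bool := btwb x (fst b) 0 || ((fst b =? 0) && btwb x (snd b) 0).
Definition AR := filter inR A.
Definition Lo (b : arr) : bool := (cnt V (fst b) 0 =? 0) && btwb x (fst b) 0 && btwb 0 (snd b) x.

Lemma JL_iff v : JL v = true <-> v = 0 \/ btw 0 v x.
Proof. unfold JL. rewrite orb_true_iff, Nat.eqb_eq, btwb_iff. tauto. Qed.
Lemma JR_iff v : JR v = true <-> v = 0 \/ btw x v 0.
Proof. unfold JR. rewrite orb_true_iff, Nat.eqb_eq, btwb_iff. tauto. Qed.
Lemma inL_iff b : inL b = true <-> btw 0 (fst b) x \/ (fst b = 0 /\ btw 0 (snd b) x).
Proof. unfold inL. rewrite orb_true_iff, andb_true_iff, Nat.eqb_eq, !btwb_iff. tauto. Qed.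
Lemma inR_iff b : inR b = true <-> btw x (fst b) 0 \/ (fst b = 0 /\ btw x (snd b) 0).
Proof. unfold inR. rewrite orb_true_iff, andb_true_iff, Nat.eqb_eq, !btwb_iff. tauto. Qed.
Lemma Lo_iff b : Lo b = true <-> cnt V (fst b) 0 = 0 /\ btw x (fst b) 0 /\ btw 0 (snd b) x.
Proof. unfold Lo. rewrite !andb_true_iff, Nat.eqb_eq, !btwb_iff. tauto. Qed.

Lemma basic : In 0 V /\ 2 <= x /\ ~ In x V.
Proof.
  destruct HS as (NV & NA & HA & _). destruct (HA _ Ha) as [Hs [Hx Hn]]. simpl in *.
  destruct (cnt_pos_inv V 0 x ltac:(lia)) as [w1 [_ B1]].
  split; auto. split; auto. unfold btw in *; lia.
Qed.

Lemma AL_sub b : In b AL -> In b A /\ (btw 0 (fst b) x \/ (fst b = 0 /\ btw 0 (snd b) x)).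
Proof. unfold AL. rewrite filter_In, inL_iff. tauto. Qed.
Lemma AR_sub b : In b AR -> In b A /\ (btw x (fst b) 0 \/ (fst b = 0 /\ btw x (snd b) 0)).
Proof. unfold AR. rewrite filter_In, inR_iff. tauto. Qed.

Lemma pair_neq (b c : arr) : snd b <> snd c -> b <> c.
Proof. intros H E; subst; auto. Qed.
Lemma pair_neq1 (b c : arr) : fst b <> fst c -> b <> c.
Proof. intros H E; subst; auto. Qed.

Lemma pair_snd_neq (b c : arr) : b <> c -> fst b = fst c -> snd b <> snd c.
Proof. intros H F E. apply H. destruct b, c; simpl in *; subst; auto. Qed.

Lemma Star_L : Star VL AL.
Proof.
  destruct basic as (Hs & Hx2 & HxV).
  destruct HS as (NV & NA & HA & HSp & HE & HAx & HB).
  unfold Star. refine (conj _ (conj _ (conj _ (conj _ (conj _ (conj _ _)))))).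
  - unfold VL. constructor; [|apply NoDup_filter; auto].
    rewrite filter_In, JL_iff. intros [_ [H|H]]; [lia|]. clear - H. unfold btw in *; lia.
  - apply NoDup_filter; auto.
  - intros b Hb. apply AL_sub in Hb as [Hb Hl]. destruct (HA _ Hb) as (H1 & H2 & H3).
    split; [|split; auto].
    + right. apply filter_In. split; auto. apply JL_iff. tauto.
    + intros [E|E].
      * destruct (HSp _ _ Ha Hb) as [Q|[Q|Q]]; simpl in *; lia.
      * apply filter_In in E as [E _]. contradiction.
  - intros b c Hb Hc. apply AL_sub in Hb as [Hb _]. apply AL_sub in Hc as [Hc _]. auto.
  - intros b c Hb Hc Hne Hf.
    apply AL_sub in Hb as [Hb Lb]. apply AL_sub in Hc as [Hc Lc].
    destruct (cnt_pos_inv V _ _ (HE b c Hb Hc Hne Hf)) as [v1 [Hv1 B1]].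
    assert (Hnot : ~ ((snd b = x \/ btw x (snd b) 0) /\ (snd c = x \/ btw x (snd c) 0))).
    { intros [Eb Ec].
      assert (Hsb : btw 0 (fst b) x).
      { destruct Lb as [?|[_ Q]]; auto. exfalso. clear - Q Eb. unfold btw in *; lia. }
      assert (Hab : inter (0,x) b).
      { destruct Eb as [Eb|Eb]; [left; simpl; auto|right; left; simpl; auto]. }
      assert (Hac : inter (0,x) c).
      { rewrite Hf in Hsb. destruct Ec as [Ec|Ec]; [left; simpl; auto|right; left; simpl; auto]. }
      apply (HB (0,x) b c Ha Hb Hc); auto; apply pair_neq1; simpl; [|rewrite <- Hf]; clear - Hsb; unfold btw in *; lia. }
    destruct (HA _ Hb) as (_ & Xb1 & Xb2). destruct (HA _ Hc) as (_ & Xc1 & Xc2).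
    assert (Sb := HSp _ _ Hb Ha). assert (Sc := HSp _ _ Hc Ha). simpl in Sb, Sc.
    assert (Hv1x : v1 <> x) by (intro; subst; contradiction).
    assert (Hbc := pair_snd_neq _ _ Hne Hf).
    rewrite Hf in Lb.
    destruct (GEL x (snd b) (snd c) v1 (fst c) Lb Lc Hnot B1 Xb1 Xc1 ltac:(lia) Sb Sc Hv1x Hbc) as [G|[G|G]].
    + apply cntJ_pos_e; auto.
    + apply (cntJ_pos _ _ _ _ _ v1); auto; apply JL_iff; auto.
    + apply (cntJ_pos _ _ _ _ _ 0); auto; apply JL_iff; auto.
  - intros b c Hb Hc Hne Hi.
    apply AL_sub in Hb as [Hb Lb]. apply AL_sub in Hc as [Hc Lc].
    destruct (HAx b c Hb Hc Hne Hi) as [C1 C2].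
    assert (Hnot : ~ (fst c = 0 /\ btw x (snd b) 0)).
    { intros [Fc Eb].
      assert (Hsb : btw 0 (fst b) x).
      { destruct Lb as [?|[_ Q]]; auto. exfalso. clear - Q Eb. unfold btw in *; lia. }
      assert (Hab : inter (0,x) b) by (right; left; simpl; auto).
      assert (Hac : (0,x) <> c).
      { intro E. destruct Lc as [Q|[_ Q]].
        - rewrite Fc in Q. clear - Q; unfold btw in *; lia.
        - rewrite <- E in Q. simpl in Q. clear - Q. unfold btw in *; lia. }
      apply (HB b (0,x) c Hb Ha Hc); auto.
      - apply pair_neq1; simpl. clear - Hsb; unfold btw in *; lia.
      - apply inter_sym; auto. }
    destruct (HA _ Hb) as (_ & Xb1 & Xb2). destruct (HA _ Hc) as (Hcv & _).
    assert (Sb := HSp _ _ Hb Ha). simpl in Sb.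
    assert (Lc' : btw 0 (fst c) x \/ fst c = 0) by tauto.
    assert (Hcx : fst c <> x) by (intro E; apply HxV; rewrite <- E; auto).
    assert (Hbc : snd b <> fst c) by (intro E; apply Xb2; rewrite E; auto).
    split.
    + destruct (cnt_pos_inv V _ _ C1) as [w1 [Hw1 B1]].
      assert (Hw1x : w1 <> x) by (intro E; subst; contradiction).
      destruct (GAL1 x (snd b) (fst b) (fst c) w1 Lb Lc' Hnot B1 Xb1 ltac:(lia) Sb Hw1x Hcx Hbc) as [G|[G|G]].
      * apply cntJ_pos_e; auto.
      * apply (cntJ_pos _ _ _ _ _ w1); auto; apply JL_iff; auto.
      * apply (cntJ_pos _ _ _ _ _ 0); auto; apply JL_iff; auto.
    + destruct (cnt_pos_inv V _ _ C2) as [w2 [Hw2 B2]].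
      assert (Hw2x : w2 <> x) by (intro E; subst; contradiction).
      destruct (GAL2 x (snd b) (fst b) (fst c) w2 Lb Lc' Hnot B2 Xb1 ltac:(lia) Sb Hw2x Hcx Hbc) as [G|[G|G]].
      * apply cntJ_pos_e; auto.
      * apply (cntJ_pos _ _ _ _ _ w2); auto; apply JL_iff; auto.
      * apply (cntJ_pos _ _ _ _ _ 0); auto; apply JL_iff; auto.
  - intros b c d Hb Hc Hd. apply AL_sub in Hb as [Hb _]. apply AL_sub in Hc as [Hc _].
    apply AL_sub in Hd as [Hd _]. eapply HB; eauto.
Qed.
Lemma Star_R : Star VR AR.
Proof.
  destruct basic as (Hs & Hx2 & HxV).
  destruct HS as (NV & NA & HA & HSp & HE & HAx & HB).
  unfold Star. refine (conj _ (conj _ (conj _ (conj _ (conj _ (conj _ _)))))).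
  - unfold VR. constructor; [|apply NoDup_filter; auto].
    rewrite filter_In, JR_iff. intros [_ [H|H]]; [lia|]. clear - H Hx2. unfold btw in *; lia.
  - apply NoDup_filter; auto.
  - intros b Hb. apply AR_sub in Hb as [Hb Hl]. destruct (HA _ Hb) as (H1 & H2 & H3).
    split; [|split; auto].
    + right. apply filter_In. split; auto. apply JR_iff. tauto.
    + intros [E|E].
      * destruct (HSp _ _ Ha Hb) as [Q|[Q|Q]]; simpl in *; lia.
      * apply filter_In in E as [E _]. contradiction.
  - intros b c Hb Hc. apply AR_sub in Hb as [Hb _]. apply AR_sub in Hc as [Hc _]. auto.
  - intros b c Hb Hc Hne Hf.
    apply AR_sub in Hb as [Hb Lb]. apply AR_sub in Hc as [Hc Lc].
    destruct (cnt_pos_inv V _ _ (HE b c Hb Hc Hne Hf)) as [v1 [Hv1 B1]].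
    assert (Hnot : ~ ((snd b = x \/ btw 0 (snd b) x) /\ (snd c = x \/ btw 0 (snd c) x))).
    { intros [Eb Ec].
      assert (Hsb : btw x (fst b) 0).
      { destruct Lb as [?|[_ Q]]; auto. exfalso. clear - Q Eb. unfold btw in *; lia. }
      assert (Hab : inter (0,x) b).
      { destruct Eb as [Eb|Eb]; [left; simpl; auto|right; right; simpl; auto]. }
      assert (Hac : inter (0,x) c).
      { rewrite Hf in Hsb. destruct Ec as [Ec|Ec]; [left; simpl; auto|right; right; simpl; auto]. }
      apply (HB (0,x) b c Ha Hb Hc); auto; apply pair_neq1; simpl; [|rewrite <- Hf]; clear - Hsb; unfold btw in *; lia. }
    destruct (HA _ Hb) as (_ & Xb1 & Xb2). destruct (HA _ Hc) as (_ & Xc1 & Xc2).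
    assert (Sb := HSp _ _ Hb Ha). assert (Sc := HSp _ _ Hc Ha). simpl in Sb, Sc.
    assert (Hv1x : v1 <> x) by (intro; subst; contradiction).
    assert (Hbc := pair_snd_neq _ _ Hne Hf).
    rewrite Hf in Lb.
    destruct (GER x (snd b) (snd c) v1 (fst c) Lb Lc Hnot B1 Xb1 Xc1 ltac:(lia) Sb Sc Hv1x Hbc) as [G|[G|G]].
    + apply cntJ_pos_e; auto.
    + apply (cntJ_pos _ _ _ _ _ v1); auto; apply JR_iff; auto.
    + apply (cntJ_pos _ _ _ _ _ 0); auto; apply JR_iff; auto.
  - intros b c Hb Hc Hne Hi.
    apply AR_sub in Hb as [Hb Lb]. apply AR_sub in Hc as [Hc Lc].
    destruct (HAx b c Hb Hc Hne Hi) as [C1 C2].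
    assert (Hnot : ~ (fst c = 0 /\ btw 0 (snd b) x)).
    { intros [Fc Eb].
      assert (Hsb : btw x (fst b) 0).
      { destruct Lb as [?|[_ Q]]; auto. exfalso. clear - Q Eb. unfold btw in *; lia. }
      assert (Hab : inter (0,x) b) by (right; right; simpl; auto).
      assert (Hac : (0,x) <> c).
      { intro E. destruct Lc as [Q|[_ Q]].
        - rewrite Fc in Q. clear - Q; unfold btw in *; lia.
        - rewrite <- E in Q. simpl in Q. clear - Q. unfold btw in *; lia. }
      apply (HB b (0,x) c Hb Ha Hc); auto.
      - apply pair_neq1; simpl. clear - Hsb; unfold btw in *; lia.
      - apply inter_sym; auto. }
    destruct (HA _ Hb) as (_ & Xb1 & Xb2). destruct (HA _ Hc) as (Hcv & _).
    assert (Sb := HSp _ _ Hb Ha). simpl in Sb.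
    assert (Lc' : btw x (fst c) 0 \/ fst c = 0) by tauto.
    assert (Hcx : fst c <> x) by (intro E; apply HxV; rewrite <- E; auto).
    assert (Hbc : snd b <> fst c) by (intro E; apply Xb2; rewrite E; auto).
    split.
    + destruct (cnt_pos_inv V _ _ C1) as [w1 [Hw1 B1]].
      assert (Hw1x : w1 <> x) by (intro E; subst; contradiction).
      destruct (GAR1 x (snd b) (fst b) (fst c) w1 Lb Lc' Hnot B1 Xb1 ltac:(lia) Sb Hw1x Hcx Hbc) as [G|[G|G]].
      * apply cntJ_pos_e; auto.
      * apply (cntJ_pos _ _ _ _ _ w1); auto; apply JR_iff; auto.
      * apply (cntJ_pos _ _ _ _ _ 0); auto; apply JR_iff; auto.
    + destruct (cnt_pos_inv V _ _ C2) as [w2 [Hw2 B2]].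
      assert (Hw2x : w2 <> x) by (intro E; subst; contradiction).
      destruct (GAR2 x (snd b) (fst b) (fst c) w2 Lb Lc' Hnot B2 Xb1 ltac:(lia) Sb Hw2x Hcx Hbc) as [G|[G|G]].
      * apply cntJ_pos_e; auto.
      * apply (cntJ_pos _ _ _ _ _ w2); auto; apply JR_iff; auto.
      * apply (cntJ_pos _ _ _ _ _ 0); auto; apply JR_iff; auto.
  - intros b c d Hb Hc Hd. apply AR_sub in Hb as [Hb _]. apply AR_sub in Hc as [Hc _].
    apply AR_sub in Hd as [Hd _]. eapply HB; eauto.
Qed.
Lemma CL (sg xi z : nat) : (btw 0 sg z \/ (sg = 0 /\ btw 0 xi z)) -> xi <> sg -> xi <> 0 ->
  (xi = z \/ xi + 2 < z \/ z + 2 < xi) -> sg <> z ->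
  (sg = 0 /\ btw 0 xi z) \/ (btw 0 sg z /\ btw sg xi z) \/ (btw 0 sg z /\ btw 0 xi sg) \/
  (btw 0 sg z /\ xi = z) \/ (btw 0 sg z /\ btw z xi 0).
Proof. intros H. destruct H as [H|[-> H]]; [|left; auto].
 assert (H' : 0 < sg /\ sg < z) by (unfold btw in H; lia). intros.
 destruct (Nat.lt_total xi sg) as [Q|[Q|Q]]; [|congruence|].
 - right; right; left. split; auto. unfold btw; lia.
 - destruct (Nat.lt_total xi z) as [Q2|[Q2|Q2]].
   + right; left. split; auto. unfold btw; lia.
   + right; right; right; left. auto.
   + right; right; right; right. split; auto. unfold btw; lia.
Qed.

Lemma CR (sg xi z : nat) : (btw z sg 0 \/ (sg = 0 /\ btw z xi 0)) -> xi <> sg -> xi <> 0 ->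
  (xi = z \/ xi + 2 < z \/ z + 2 < xi) -> sg <> z ->
  (sg = 0 /\ btw z xi 0) \/ (btw z sg 0 /\ btw sg xi 0) \/ (btw z sg 0 /\ btw z xi sg) \/
  (btw z sg 0 /\ xi = z) \/ (btw z sg 0 /\ btw 0 xi z).
Proof. intros H. destruct H as [H|[-> H]]; [|left; auto].
 assert (H' : 0 < z /\ z < sg) by (unfold btw in H; lia). intros.
 destruct (Nat.lt_total xi sg) as [Q|[Q|Q]]; [|congruence|].
 - destruct (Nat.lt_total xi z) as [Q2|[Q2|Q2]].
   + right; right; right; right. split; auto. unfold btw; lia.
   + right; right; right; left. auto.
   + right; right; left. split; auto. unfold btw; lia.
 - right; left. split; auto. unfold btw; lia.
Qed.

Ltac bl := unfold btw in *; lia.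

Lemma long_L b : In b AL -> longb V b = true -> longb VL b = true.
Proof.
  intros HbL Lb. destruct (AL_sub b HbL) as [Hb Sec].
  destruct basic as (Hs & Hx2 & HxV).
  destruct HS as (NV & NA & HA & HSp & HE & HAx & HB).
  destruct (HA _ Hb) as (Hsv & Hx1 & Hxn).
  assert (Sp := HSp _ _ Hb Ha). simpl in Sp.
  assert (Lb' := Lb). apply longb_iff in Lb' as [L1 L2]. apply longb_iff.
  destruct b as [sg xi]. simpl in *.
  assert (Hxs : xi <> sg) by (intro E; apply Hxn; rewrite E; auto).
  assert (Hsx : sg <> x) by (intro E; apply HxV; rewrite <- E; auto).
  unfold VL.
  destruct (CL sg xi x Sec Hxs ltac:(lia) Sp Hsx) as [[C1 C2]|[[C1 C2]|[[C1 C2]|[[C1 C2]|[C1 C2]]]]]; clear Sec.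
  - subst sg. split.
    + eapply Nat.le_trans; [exact L1|]. apply cntJ_mono. intros v _ Hv. split; auto. apply JL_iff. right. bl.
    + assert (Hne : (0,xi) <> (0,x)) by (apply pair_neq; simpl; bl).
      destruct (cnt_pos_inv V _ _ (HE _ _ Hb Ha Hne eq_refl)) as [w [Hw Bw]]. simpl in Bw.
      apply (cntJ_two_e _ _ _ _ _ w); auto; [apply JL_iff; right| |]; bl.
  - split.
    + eapply Nat.le_trans; [exact L1|]. apply cntJ_mono. intros v _ Hv. split; auto. apply JL_iff. right. bl.
    + apply (cntJ_two_e _ _ _ _ _ 0); auto; bl.
  - split.
    + apply (cntJ_two_e _ _ _ _ _ 0); auto; bl.
    + eapply Nat.le_trans; [exact L2|]. apply cntJ_mono. intros v _ Hv. split; auto. apply JL_iff. right. bl.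
  - subst xi. split.
    + eapply Nat.le_trans; [exact L1|]. apply cntJ_mono. intros v _ Hv. split; auto. apply JL_iff. right. bl.
    + apply (cntJ_two_e _ _ _ _ _ 0); auto; bl.
  - assert (Hi : inter (0,x) (sg,xi)) by (right; left; simpl; auto).
    assert (Hne : (0,x) <> (sg,xi)) by (apply pair_neq1; simpl; bl).
    destruct (HAx _ _ Ha Hb Hne Hi) as [_ K2]. simpl in K2.
    destruct (cnt_pos_inv V _ _ K2) as [w [Hw Bw]].
    split.
    + apply (cntJ_two_e _ _ _ _ _ w); auto; [apply JL_iff; right| |]; bl.
    + destruct (Nat.eq_dec (cnt V 0 sg) 0) as [E|E].
      { exfalso. apply (Hgood (sg,xi) Hb Lb); simpl; auto. bl. }
      destruct (cnt_pos_inv V 0 sg ltac:(lia)) as [w' [Hw' Bw']].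
      apply (cntJ_two _ _ _ _ _ 0 w'); auto; try (apply JL_iff; right); bl.
Qed.

Lemma long_R b : In b AR -> longb V b = true -> longb VR b = true \/ Lo b = true.
Proof.
  intros HbR Lb. destruct (AR_sub b HbR) as [Hb Sec].
  destruct basic as (Hs & Hx2 & HxV).
  destruct HS as (NV & NA & HA & HSp & HE & HAx & HB).
  destruct (HA _ Hb) as (Hsv & Hx1 & Hxn).
  assert (Sp := HSp _ _ Hb Ha). simpl in Sp.
  assert (Lb' := Lb). apply longb_iff in Lb' as [L1 L2]. rewrite longb_iff, Lo_iff.
  destruct b as [sg xi]. simpl in *.
  assert (Hxs : xi <> sg) by (intro E; apply Hxn; rewrite E; auto).
  assert (Hsx : sg <> x) by (intro E; apply HxV; rewrite <- E; auto).
  unfold VR.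
  destruct (CR sg xi x Sec Hxs ltac:(lia) Sp Hsx) as [[C1 C2]|[[C1 C2]|[[C1 C2]|[[C1 C2]|[C1 C2]]]]]; clear Sec.
  - subst sg. left. split.
    + assert (Hne : (0,x) <> (0,xi)) by (apply pair_neq; simpl; bl).
      destruct (cnt_pos_inv V _ _ (HE _ _ Ha Hb Hne eq_refl)) as [w [Hw Bw]]. simpl in Bw.
      apply (cntJ_two_e _ _ _ _ _ w); auto; [apply JR_iff; right| |]; bl.
    + eapply Nat.le_trans; [exact L2|]. apply cntJ_mono. intros v _ Hv. split; auto. apply JR_iff. right. bl.
  - left. split.
    + eapply Nat.le_trans; [exact L1|]. apply cntJ_mono. intros v _ Hv. split; auto. apply JR_iff. right. bl.
    + apply (cntJ_two_e _ _ _ _ _ 0); auto; bl.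
  - left. split.
    + apply (cntJ_two_e _ _ _ _ _ 0); auto; bl.
    + eapply Nat.le_trans; [exact L2|]. apply cntJ_mono. intros v _ Hv. split; auto. apply JR_iff. right. bl.
  - subst xi. left. split.
    + apply (cntJ_two_e _ _ _ _ _ 0); auto; bl.
    + eapply Nat.le_trans; [exact L2|]. apply cntJ_mono. intros v _ Hv. split; auto. apply JR_iff. right. bl.
  - assert (Hi : inter (0,x) (sg,xi)) by (right; right; simpl; auto).
    assert (Hne : (0,x) <> (sg,xi)) by (apply pair_neq1; simpl; bl).
    destruct (HAx _ _ Ha Hb Hne Hi) as [K1 _]. simpl in K1.
    destruct (cnt_pos_inv V _ _ K1) as [w [Hw Bw]].
    destruct (Nat.eq_dec (cnt V sg 0) 0) as [E|E]; [right; auto|left].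
    destruct (cnt_pos_inv V sg 0 ltac:(lia)) as [w' [Hw' Bw']].
    split.
    + apply (cntJ_two _ _ _ _ _ 0 w'); auto; try (apply JR_iff; right); bl.
    + apply (cntJ_two_e _ _ _ _ _ w); auto; [apply JR_iff; right| |]; bl.
Qed.
Lemma size_L : length VL = 2 + cnt V 0 x.
Proof.
  destruct basic as (Hs & Hx2 & HxV). destruct HS as (NV & _).
  unfold VL, JL. simpl. rewrite (len_filter_or (fun v => v =? 0) (fun v => btwb 0 v x)).
  - rewrite len_filter_eq1; auto.
  - intros v _ E1 E2. apply Nat.eqb_eq in E1. apply btwb_iff in E2. subst. bl.
Qed.

Lemma size_R : length VR = 2 + cnt V x 0.
Proof.
  destruct basic as (Hs & Hx2 & HxV). destruct HS as (NV & _).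
  unfold VR, JR. simpl. rewrite (len_filter_or (fun v => v =? 0) (fun v => btwb x v 0)).
  - rewrite len_filter_eq1; auto.
  - intros v _ E1 E2. apply Nat.eqb_eq in E1. apply btwb_iff in E2. subst. bl.
Qed.

Lemma size_V : length V = 1 + cnt V 0 x + cnt V x 0.
Proof.
  destruct basic as (Hs & Hx2 & HxV). destruct HS as (NV & _).
  rewrite <- (len_filter_all (fun v => ((v =? 0) || btwb 0 v x) || btwb x v 0) V).
  - rewrite (len_filter_or (fun v => (v =? 0) || btwb 0 v x) (fun v => btwb x v 0)).
    + rewrite (len_filter_or (fun v => v =? 0) (fun v => btwb 0 v x)).
      * rewrite len_filter_eq1; auto.
      * intros v _ E1 E2. apply Nat.eqb_eq in E1. apply btwb_iff in E2. subst. bl.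
    + intros v _ E1 E2. apply orb_true_iff in E1. apply btwb_iff in E2.
      destruct E1 as [E1|E1]; [apply Nat.eqb_eq in E1|apply btwb_iff in E1]; subst; bl.
  - intros v Hv. assert (v <> x) by (intro; subst; contradiction).
    rewrite !orb_true_iff, Nat.eqb_eq, !btwb_iff. unfold btw; lia.
Qed.

Lemma part b : In b A -> b = (0,x) \/ inL b = true \/ inR b = true.
Proof.
  intros Hb. destruct basic as (Hs & Hx2 & HxV). destruct HS as (NV & NA & HA & HSp & HE & _).
  destruct (HA _ Hb) as (Hsv & Hx1 & Hxn). rewrite inL_iff, inR_iff.
  assert (Hsx : fst b <> x) by (intro E; apply HxV; rewrite <- E; auto).
  destruct (Nat.eq_dec (fst b) 0) as [E|E].
  - assert (snd b <> 0) by (intro Q; apply Hxn; rewrite Q; auto).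
    destruct (Nat.eq_dec (snd b) x) as [Q|Q].
    + left. destruct b; simpl in *; subst; auto.
    + right. rewrite E. unfold btw; lia.
  - right. unfold btw; lia.
Qed.

Lemma Lo_le1 : length (filter Lo AR) <= 1.
Proof.
  destruct basic as (Hs & Hx2 & HxV). destruct HS as (NV & NA & HA & HSp & HE & HAx & HB).
  apply len_le1.
  - apply NoDup_filter. apply NoDup_filter. auto.
  - intros b c Hb Hc. apply filter_In in Hb as [Hb Lb]. apply filter_In in Hc as [Hc Lc].
    apply AR_sub in Hb as [Hb _]. apply AR_sub in Hc as [Hc _].
    apply Lo_iff in Lb as (Cb & Rb & Xb). apply Lo_iff in Lc as (Cc & Rc & Xc).
    destruct (classic (b = c)) as [|Hne]; auto. exfalso.
    assert (Hf : fst b = fst c).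
    { apply (prev_uniq V 0); try apply HA; auto; bl. }
    apply (HB (0,x) b c Ha Hb Hc); auto.
    + apply pair_neq1; simpl; bl.
    + apply pair_neq1; simpl; bl.
    + right; right; simpl; auto.
    + right; right; simpl; auto.
Qed.

Lemma bound_split : length (filter (longb V) A) <= 1 + length (filter (longb VL) AL) + (1 + length (filter (longb VR) AR)).
Proof.
  destruct HS as (NV & NA & _).
  assert (P := part_count (0,x) (longb V) inL inR A NA part).
  fold AL in P. fold AR in P.
  assert (K1 : length (filter (longb V) AL) <= length (filter (longb VL) AL)).
  { apply filter_len_mono. intros b Hb Lb. apply long_L; auto. }
  assert (K2 : length (filter (longb V) AR) <= length (filter (longb VR) AR) + length (filter Lo AR)).
  { apply len_filter_split. intros b Hb Lb. apply long_R; auto. }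
  assert (K3 := Lo_le1). unfold AL, AR in *. lia.
Qed.
End Split.
Definition rot (M s p : nat) : nat := if s <=? p then p - s else p + M - s.
Definition rotp (M s : nat) (b : arr) : arr := (rot M s (fst b), rot M s (snd b)).

Lemma rot_lt M s p : s < M -> p < M -> rot M s p < M.
Proof. unfold rot. destruct (Nat.leb_spec s p); lia. Qed.

Lemma rot_inj M s p q : s < M -> p < M -> q < M -> rot M s p = rot M s q -> p = q.
Proof. unfold rot. destruct (Nat.leb_spec s p), (Nat.leb_spec s q); lia. Qed.

Lemma rot_s M s : rot M s s = 0.
Proof. unfold rot. rewrite Nat.leb_refl. lia. Qed.

Lemma rot_zero M s p : s < M -> p < M -> rot M s p = 0 -> p = s.
Proof. unfold rot. destruct (Nat.leb_spec s p); lia. Qed.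

Lemma rot_btw M s a b c : s < M -> a < M -> b < M -> c < M ->
  (btw (rot M s a) (rot M s b) (rot M s c) <-> btw a b c).
Proof.
  intros. unfold rot. destruct (Nat.leb_spec s a), (Nat.leb_spec s b), (Nat.leb_spec s c); unfold btw; lia.
Qed.

Lemma rot_btwb M s a b c : s < M -> a < M -> b < M -> c < M ->
  btwb (rot M s a) (rot M s b) (rot M s c) = btwb a b c.
Proof.
  intros. destruct (btwb a b c) eqn:E.
  - apply btwb_iff. apply rot_btw; auto. apply btwb_iff; auto.
  - apply btwb_false. rewrite rot_btw by auto. apply btwb_false; auto.
Qed.

Lemma rot_cnt M s V a c : s < M -> a < M -> c < M -> (forall v, In v V -> v < M) ->
  cnt (map (rot M s) V) (rot M s a) (rot M s c) = cnt V a c.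
Proof.
  intros Hs Ha Hc HV. unfold cnt. induction V as [|v V IH]; simpl; auto.
  rewrite rot_btwb by (auto; apply HV; left; auto).
  destruct (btwb a v c); simpl; rewrite IH by (intros; apply HV; simpl; auto); auto.
Qed.

Lemma NoDup_map_inj_on {T U} (f : T -> U) l :
  (forall x y, In x l -> In y l -> f x = f y -> x = y) -> NoDup l -> NoDup (map f l).
Proof.
  induction l as [|h l IH]; simpl; intros Hi N; constructor.
  - inversion N as [|? ? Hn N2]; subst. intro Hm. apply in_map_iff in Hm as [y [E Hy]].
    apply Hn. rewrite (Hi y h) in Hy; auto.
  - inversion N as [|? ? Hn N2]; subst. apply IH; auto.
Qed.

Fixpoint maxl (l : list nat) : nat := match l with [] => 0 | h :: t => Nat.max h (maxl t) end.
Lemma maxl_ge l p : In p l -> p <= maxl l.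
Proof. induction l as [|h l IH]; simpl; [contradiction|]. intros [->|H]; [lia|]. specialize (IH H). lia. Qed.

Lemma len_filter_map {T U} (f : U -> bool) (g : T -> U) l :
  length (filter f (map g l)) = length (filter (fun b => f (g b)) l).
Proof. induction l as [|h l IH]; simpl; auto. destruct (f (g h)); simpl; auto. Qed.

Lemma len_filter_ext {T} (f g : T -> bool) l : (forall x, In x l -> f x = g x) -> length (filter f l) = length (filter g l).
Proof. intros H. induction l as [|h l IH]; simpl; auto. rewrite H by (left; auto). destruct (g h); simpl; rewrite IH; auto; intros; apply H; simpl; auto. Qed.

Section Rot.
Variables (V : list nat) (A : list arr) (s : nat).
Hypothesis HS : Star V A.
Hypothesis Hs : In s V.
Definition Mx := 3 + maxl (V ++ map snd A).
Definition rV := map (rot Mx s) V.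
Definition rA := map (rotp Mx s) A.

Lemma Mx_V v : In v V -> v + 3 <= Mx.
Proof. intros H. unfold Mx. assert (v <= maxl (V ++ map snd A)) by (apply maxl_ge; apply in_or_app; auto). lia. Qed.
Lemma Mx_X b : In b A -> snd b + 3 <= Mx.
Proof. intros H. unfold Mx. assert (snd b <= maxl (V ++ map snd A)) by (apply maxl_ge; apply in_or_app; right; apply in_map; auto). lia. Qed.
Lemma Mx_F b : In b A -> fst b + 3 <= Mx.
Proof. intros H. destruct HS as (_ & _ & HA & _). apply Mx_V. apply HA; auto. Qed.
Lemma Mx_s : s + 3 <= Mx.
Proof. apply Mx_V; auto. Qed.

Lemma rot_cntV a c : a < Mx -> c < Mx -> cnt rV (rot Mx s a) (rot Mx s c) = cnt V a c.
Proof. intros. unfold rV. apply rot_cnt; auto. pose Mx_s. lia. intros v Hv. pose (Mx_V v Hv). lia. Qed.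

Lemma rot_long b : In b A -> longb rV (rotp Mx s b) = longb V b.
Proof.
  intros Hb. unfold longb, rotp. simpl. pose (Mx_X b Hb). pose (Mx_F b Hb).
  rewrite !rot_cntV by lia. reflexivity.
Qed.

Lemma rot_inter b c : In b A -> In c A -> (inter (rotp Mx s b) (rotp Mx s c) <-> inter b c).
Proof.
  intros Hb Hc. pose (Mx_X b Hb). pose (Mx_F b Hb). pose (Mx_X c Hc). pose (Mx_F c Hc). pose Mx_s.
  unfold inter, rotp; simpl. rewrite !rot_btw by lia.
  split; intros [H|H]; try (right; exact H); left.
  - apply rot_inj in H; lia.
  - rewrite H; auto.
Qed.

Lemma rotp_inj b c : In b A -> In c A -> rotp Mx s b = rotp Mx s c -> b = c.
Proof.
  intros Hb Hc E. pose (Mx_X b Hb). pose (Mx_F b Hb). pose (Mx_X c Hc). pose (Mx_F c Hc). pose Mx_s.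
  unfold rotp in E. injection E as E1 E2. apply rot_inj in E1; try lia. apply rot_inj in E2; try lia.
  destruct b, c; simpl in *; subst; auto.
Qed.

Lemma rotp_neq b c : In b A -> In c A -> b <> c -> rotp Mx s b <> rotp Mx s c.
Proof. intros Hb Hc H E. apply H. apply rotp_inj; auto. Qed.

Lemma Star_rot : Star rV rA.
Proof.
  destruct HS as (NV & NA & HA & HSp & HE & HAx & HB). pose Mx_s.
  unfold Star. refine (conj _ (conj _ (conj _ (conj _ (conj _ (conj _ _)))))).
  - unfold rV. apply NoDup_map_inj_on; auto. intros p q Hp Hq E. pose (Mx_V p Hp). pose (Mx_V q Hq).
    apply rot_inj in E; lia.
  - unfold rA. apply NoDup_map_inj_on; auto. intros; apply rotp_inj; auto.
  - unfold rA. intros b' Hb'. apply in_map_iff in Hb' as [b [<- Hb]]. destruct (HA _ Hb) as (H1 & H2 & H3).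
    pose (Mx_X b Hb). pose (Mx_F b Hb).
    unfold rotp; simpl. split; [|split].
    + unfold rV. apply in_map; auto.
    + destruct (Nat.eq_dec (rot Mx s (snd b)) 0) as [E|E]; [|lia].
      apply rot_zero in E; try lia. rewrite E in H3. contradiction.
    + unfold rV. intros Hm. apply in_map_iff in Hm as [v [E Hv]]. pose (Mx_V v Hv).
      apply rot_inj in E; try lia. apply H3. rewrite <- E. exact Hv.
  - unfold rA. intros b' c' Hb' Hc'. apply in_map_iff in Hb' as [b [<- Hb]]. apply in_map_iff in Hc' as [c [<- Hc]].
    pose (Mx_X b Hb). pose (Mx_X c Hc). destruct (HSp _ _ Hb Hc) as [Q|[Q|Q]]; unfold rotp; simpl;
    unfold rot; destruct (Nat.leb_spec s (snd b)), (Nat.leb_spec s (snd c)); lia.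
  - unfold rA. intros b' c' Hb' Hc' Hne Hf. apply in_map_iff in Hb' as [b [<- Hb]]. apply in_map_iff in Hc' as [c [<- Hc]].
    assert (b <> c) by (intro; subst; auto).
    pose (Mx_X b Hb). pose (Mx_F b Hb). pose (Mx_X c Hc). pose (Mx_F c Hc).
    unfold rotp in *; simpl in *. apply rot_inj in Hf; try lia. rewrite rot_cntV by lia. apply HE; auto.
  - unfold rA. intros b' c' Hb' Hc' Hne Hi. apply in_map_iff in Hb' as [b [<- Hb]]. apply in_map_iff in Hc' as [c [<- Hc]].
    assert (b <> c) by (intro; subst; auto). apply (proj1 (rot_inter b c Hb Hc)) in Hi.
    pose (Mx_X b Hb). pose (Mx_F b Hb). pose (Mx_X c Hc). pose (Mx_F c Hc).
    unfold rotp; simpl. rewrite !rot_cntV by lia. apply HAx; auto.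
  - unfold rA. intros b' c' d' Hb' Hc' Hd' H1 H2 H3 Hf Hi1 Hi2.
    apply in_map_iff in Hb' as [b [<- Hb]]. apply in_map_iff in Hc' as [c [<- Hc]]. apply in_map_iff in Hd' as [d [<- Hd]].
    apply (proj1 (rot_inter b c Hb Hc)) in Hi1. apply (proj1 (rot_inter b d Hb Hd)) in Hi2.
    pose (Mx_F c Hc). pose (Mx_F d Hd).
    unfold rotp in Hf; simpl in Hf. apply rot_inj in Hf; try lia.
    apply (HB b c d); auto; intro; subst; auto.
Qed.

Lemma rot_count : length (filter (longb rV) rA) = length (filter (longb V) A).
Proof.
  unfold rA. rewrite len_filter_map. apply len_filter_ext. intros b Hb. apply rot_long; auto.
Qed.

Lemma rot_len : length rV = length V.
Proof. unfold rV. apply length_map. Qed.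
End Rot.

Theorem abs_main : forall n V A, length V = n -> Star V A -> length (filter (longb V) A) <= 2*n - 8.
Proof.
  intros n. induction n as [n IH] using lt_wf_ind. intros V A Hn HS.
  destruct (classic (exists b, In b A /\ longb V b = true)) as [Ex|NEx].
  2:{ rewrite len_filter_none; [lia|]. intros b Hb. destruct (longb V b) eqn:E; auto. exfalso; eauto. }
  destruct (good_exists V A HS Ex) as [[s x] [Ha [La Hg]]].
  assert (HSc := HS). destruct HSc as (NV & NA & HA & HSp & HE & HAx & HB).
  destruct (HA _ Ha) as [Hs _]. simpl in Hs, Hg.
  pose (x' := rot (Mx V A) s x).
  assert (HS' := Star_rot V A s HS Hs).
  assert (Ha' : In (0, x') (rA V A s)).
  { unfold rA. replace (0, x') with (rotp (Mx V A) s (s,x)). apply in_map; auto.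
    unfold rotp; simpl. rewrite rot_s. reflexivity. }
  assert (Q1 := Mx_X V A (s,x) Ha). assert (Q2 := Mx_s V A s Hs). simpl in Q1.
  assert (La' : 2 <= cnt (rV V A s) 0 x' /\ 2 <= cnt (rV V A s) x' 0).
  { assert (E1 := rot_cntV V A s Hs s x ltac:(lia) ltac:(lia)).
    assert (E2 := rot_cntV V A s Hs x s ltac:(lia) ltac:(lia)).
    rewrite rot_s in E1, E2. change (rot (Mx V A) s x) with x' in E1, E2.
    apply longb_iff in La. simpl in La. lia. }
  assert (Hg' : forall c, In c (rA V A s) -> longb (rV V A s) c = true -> fst c <> 0 ->
      cnt (rV V A s) 0 (fst c) = 0 -> ~ inter (0,x') c).
  { intros c' Hc' Lc Hf Cz. unfold rA in Hc'. apply in_map_iff in Hc' as [c [<- Hc]].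
    rewrite (rot_long V A s HS Hs) in Lc; auto.
    assert (Q3 := Mx_F V A HS c Hc).
    replace (0,x') with (rotp (Mx V A) s (s,x)) by (unfold rotp; simpl; rewrite rot_s; auto).
    rewrite (rot_inter V A s HS Hs); auto. apply Hg; auto.
    - intro E. apply Hf. unfold rotp; simpl. rewrite E. apply rot_s.
    - unfold rotp in Cz; simpl in Cz.
      assert (E3 := rot_cntV V A s Hs s (fst c) ltac:(lia) ltac:(lia)).
      rewrite rot_s in E3. lia. }
  assert (Hlen := rot_len V A s).
  assert (Hcnt := rot_count V A s HS Hs).
  rewrite <- Hcnt.
  assert (B := bound_split (rV V A s) (rA V A s) x' HS' Ha' La' Hg').
  assert (SL := size_L (rV V A s) (rA V A s) x' HS' Ha' La').
  assert (SR := size_R (rV V A s) (rA V A s) x' HS' Ha' La').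
  assert (SV := size_V (rV V A s) (rA V A s) x' HS' Ha' La').
  assert (IL := IH (length (VL (rV V A s) x')) ltac:(lia) _ _ eq_refl (Star_L (rV V A s) (rA V A s) x' HS' Ha' La')).
  assert (IR := IH (length (VR (rV V A s) x')) ltac:(lia) _ _ eq_refl (Star_R (rV V A s) (rA V A s) x' HS' Ha' La')).
  lia.
Qed.
Definition vpos (Q k : nat) : nat := 3 * Q * k.
Definition xpos (Q j r : nat) : nat := 3 * Q * j + 3 * r + 1.

Lemma vv_lt Q k l : (1 <= Q)%nat -> (vpos Q k < vpos Q l)%nat <-> (k < l)%nat.
Proof. intros. unfold vpos. split; intros; nia. Qed.
Lemma vx_lt Q k j r : (r < Q)%nat -> (vpos Q k < xpos Q j r)%nat <-> (k <= j)%nat.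
Proof. intros. unfold vpos, xpos. split; intros; nia. Qed.
Lemma xv_lt Q k j r : (r < Q)%nat -> (xpos Q j r < vpos Q k)%nat <-> (j < k)%nat.
Proof. intros. unfold vpos, xpos. split; intros; nia. Qed.
Lemma xx_lt Q j l r r' : (r < Q)%nat -> (r' < Q)%nat -> (xpos Q j r < xpos Q l r')%nat <-> ((j < l)%nat \/ (j = l /\ (r < r')%nat)).
Proof. intros. unfold xpos. split; intros; [|nia].
  destruct (Nat.lt_total j l) as [H2|[H2|H2]]; [left; auto|right; subst; split; auto; nia|exfalso; nia]. Qed.
Lemma vv_eq Q k l : (1 <= Q)%nat -> vpos Q k = vpos Q l -> k = l.
Proof. unfold vpos. intros. nia. Qed.
Lemma xx_eq Q j l r r' : (r < Q)%nat -> (r' < Q)%nat -> xpos Q j r = xpos Q l r' -> j = l /\ r = r'.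
Proof. unfold xpos. intros. destruct (Nat.lt_total j l) as [H2|[H2|H2]]; [exfalso; nia| |exfalso; nia]. subst. split; auto. lia. Qed.
Lemma vx_neq Q k j r : vpos Q k <> xpos Q j r.
Proof. unfold vpos, xpos. lia. Qed.
Lemma xx_sp Q j l r r' : (r < Q)%nat -> (r' < Q)%nat ->
  xpos Q j r = xpos Q l r' \/ (xpos Q j r + 2 < xpos Q l r')%nat \/ (xpos Q l r' + 2 < xpos Q j r)%nat.
Proof. intros. unfold xpos. destruct (Nat.lt_total j l) as [H2|[H2|H2]]; [right; left; nia| |right; right; nia].
  subst. lia. Qed.
Lemma succ_mod_eq m j : (j < m)%nat -> succ_mod m j = if (S j <? m)%nat then S j else 0%nat.
Proof.
  intros. unfold succ_mod. destruct (Nat.ltb_spec (S j) m).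
  - apply Nat.mod_small; auto.
  - assert (S j = m) by lia. subst. apply Nat.Div0.mod_same.
Qed.

Section Conv.
Variables (m Q : nat).
Hypothesis Hm : (4 <= m)%nat.
Hypothesis HQ : (1 <= Q)%nat.

Definition unr (i n : nat) : nat := if (i <=? n)%nat then n else (n + m)%nat.
Definition pred_m (j : nat) : nat := if (j =? 0)%nat then (m - 1)%nat else (j - 1)%nat.


Ltac cv := unfold btw, unr, pred_m in *;
  repeat match goal with
  | |- context [(vpos Q ?k < vpos Q ?l)%nat] => rewrite (vv_lt Q k l HQ)
  | H : context [(vpos Q ?k < vpos Q ?l)%nat] |- _ => rewrite (vv_lt Q k l HQ) in H
  | H : (?r < Q)%nat |- context [(vpos Q ?k < xpos Q ?j ?r)%nat] => rewrite (vx_lt Q k j r H)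
  | H : (?r < Q)%nat, H2 : context [(vpos Q ?k < xpos Q ?j ?r)%nat] |- _ => rewrite (vx_lt Q k j r H) in H2
  | H : (?r < Q)%nat |- context [(xpos Q ?j ?r < vpos Q ?k)%nat] => rewrite (xv_lt Q k j r H)
  | H : (?r < Q)%nat, H2 : context [(xpos Q ?j ?r < vpos Q ?k)%nat] |- _ => rewrite (xv_lt Q k j r H) in H2
  | H : (?r < Q)%nat, H' : (?r' < Q)%nat |- context [(xpos Q ?j ?r < xpos Q ?l ?r')%nat] => rewrite (xx_lt Q j l r r' H H')
  | H : (?r < Q)%nat, H' : (?r' < Q)%nat, H2 : context [(xpos Q ?j ?r < xpos Q ?l ?r')%nat] |- _ => rewrite (xx_lt Q j l r r' H H') in H2
  end;
  repeat match goal with H : context [if _ then _ else _] |- _ => revert H end;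
  repeat match goal with
  | |- context [(?a <=? ?b)%nat] => destruct (Nat.leb_spec a b)
  | |- context [(?a <? ?b)%nat] => destruct (Nat.ltb_spec a b)
  | |- context [(?a =? ?b)%nat] => destruct (Nat.eqb_spec a b)
  end; intros; lia.

Lemma CV1 i k j r : (i < m)%nat -> (k < m)%nat -> (j < m)%nat -> (r < Q)%nat -> k <> i ->
  btw (vpos Q i) (vpos Q k) (xpos Q j r) -> (i < unr i k)%nat /\ (unr i k <= unr i j)%nat.
Proof. intros. cv. Qed.

Lemma CV2 i k j r : (i < m)%nat -> (k < m)%nat -> (j < m)%nat -> (r < Q)%nat ->
  btw (xpos Q j r) (vpos Q k) (vpos Q i) -> (unr i j < unr i k)%nat /\ (unr i k < i + m)%nat.
Proof. intros. cv. Qed.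

Lemma CX1 i l j r r' : (i < m)%nat -> (l < m)%nat -> (j < m)%nat -> (r < Q)%nat -> (r' < Q)%nat ->
  btw (vpos Q i) (xpos Q l r') (xpos Q j r) -> ((i <= unr i l)%nat /\ (unr i l < unr i j)%nat) \/ (l = j /\ (r' < r)%nat).
Proof. intros. cv. Qed.

Lemma CX2 i l j r r' : (i < m)%nat -> (l < m)%nat -> (j < m)%nat -> (r < Q)%nat -> (r' < Q)%nat ->
  btw (xpos Q j r) (xpos Q l r') (vpos Q i) -> ((unr i j < unr i l)%nat /\ (unr i l < i + m)%nat) \/ (l = j /\ (r < r')%nat).
Proof. intros. cv. Qed.

Lemma W1 k j r : (k < m)%nat -> (j < m)%nat -> (r < Q)%nat -> k <> succ_mod m j ->
  btw (xpos Q j r) (vpos Q (succ_mod m j)) (vpos Q k).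
Proof. intros. rewrite (succ_mod_eq m) in * by auto. cv. Qed.

Lemma W2 k j r : (k < m)%nat -> (j < m)%nat -> (r < Q)%nat -> k <> j ->
  btw (vpos Q k) (vpos Q j) (xpos Q j r).
Proof. intros. cv. Qed.

Lemma W3 j l r r' : (j < m)%nat -> (l < m)%nat -> (r < Q)%nat -> (r' < Q)%nat -> j <> l ->
  btw (xpos Q j r) (vpos Q (succ_mod m j)) (xpos Q l r').
Proof. intros. rewrite (succ_mod_eq m) by auto. cv. Qed.

Lemma LW1 i j r : (i < m)%nat -> (j < m)%nat -> (r < Q)%nat -> pred_m j <> i -> j <> i ->
  btw (vpos Q i) (vpos Q (pred_m j)) (xpos Q j r).
Proof. intros. cv. Qed.

Lemma succ_lt j : (j < m)%nat -> (succ_mod m j < m)%nat.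
Proof. intros. rewrite (succ_mod_eq m) by auto. destruct (Nat.ltb_spec (S j) m); lia. Qed.

Lemma pred_lt j : (j < m)%nat -> (pred_m j < m)%nat.
Proof. intros. unfold pred_m. destruct (Nat.eqb_spec j 0); lia. Qed.

Lemma LW2 i j r : (i < m)%nat -> (j < m)%nat -> (r < Q)%nat -> succ_mod m (succ_mod m j) <> i -> succ_mod m j <> i ->
  btw (xpos Q j r) (vpos Q (succ_mod m (succ_mod m j))) (vpos Q i).
Proof.
  intros. assert (Hs := succ_lt j H0). rewrite (succ_mod_eq m (succ_mod m j)) in * by auto.
  rewrite (succ_mod_eq m j) in * by auto. cv.
Qed.
End Conv.
Open Scope R_scope.

Definition cr (ax ay bx by_ cx cy : R) : R := (bx - ax) * (cy - ay) - (by_ - ay) * (cx - ax).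

Lemma trig_pos x y : 0 < x -> 0 < y -> x + y < 2*PI -> 0 < sin x + sin y - sin (x + y).
Proof.
  intros Hx Hy Hxy.
  set (p := x/2). set (q := y/2).
  assert (Ex : x = 2*p) by (unfold p; field). assert (Ey : y = 2*q) by (unfold q; field).
  assert (E : sin x + sin y - sin (x + y) = 4 * sin p * sin q * sin (p + q)).
  { rewrite sin_plus, Ex, Ey, !sin_2a, !cos_2a_sin, sin_plus. ring. }
  rewrite E.
  assert (0 < sin p) by (apply sin_gt_0; unfold p; lra).
  assert (0 < sin q) by (apply sin_gt_0; unfold q; lra).
  assert (0 < sin (p+q)) by (apply sin_gt_0; unfold p, q; lra).
  assert (0 < sin p * sin q) by (apply Rmult_lt_0_compat; auto).
  assert (0 < sin p * sin q * sin (p+q)) by (apply Rmult_lt_0_compat; auto).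
  lra.
Qed.

Lemma cr_circle a b g : cr (cos a) (sin a) (cos b) (sin b) (cos g) (sin g) = sin (b - a) + sin (g - b) - sin (g - a).
Proof. unfold cr. rewrite !sin_minus. ring. Qed.

Lemma cr_circle_pos a b g : a < b -> b < g -> g < a + 2*PI -> 0 < cr (cos a) (sin a) (cos b) (sin b) (cos g) (sin g).
Proof.
  intros. rewrite cr_circle. replace (g - a) with ((b - a) + (g - b)) by ring.
  apply trig_pos; lra.
Qed.

Lemma ang_lt m a b : (0 < m)%nat -> (a < b)%nat -> 2*PI*INR a/INR m < 2*PI*INR b/INR m.
Proof.
  intros Hm Hab. assert (0 < INR m) by (apply lt_0_INR; auto).
  assert (INR a < INR b) by (apply lt_INR; auto).
  unfold Rdiv. apply Rmult_lt_compat_r; [apply Rinv_0_lt_compat; auto|].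
  assert (0 < PI) by apply PI_RGT_0. nra.
Qed.

Lemma ang_wrap m a c : (0 < m)%nat -> (c < a + m)%nat -> 2*PI*INR c/INR m < 2*PI*INR a/INR m + 2*PI.
Proof.
  intros Hm H. assert (0 < INR m) by (apply lt_0_INR; auto).
  assert (INR c < INR a + INR m) by (rewrite <- plus_INR; apply lt_INR; auto).
  assert (0 < PI) by apply PI_RGT_0.
  replace (2*PI*INR a/INR m + 2*PI) with (2*PI*(INR a + INR m)/INR m) by (field; lra).
  unfold Rdiv. apply Rmult_lt_compat_r; [apply Rinv_0_lt_compat; auto|]. nra.
Qed.

Lemma pt_pos m a b c : (0 < m)%nat -> (a < b)%nat -> (b < c)%nat -> (c < a + m)%nat ->
  0 < cr (vx m a) (vy m a) (vx m b) (vy m b) (vx m c) (vy m c).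
Proof.
  intros. unfold vx, vy. apply cr_circle_pos; [apply ang_lt; auto|apply ang_lt; auto|apply ang_wrap; auto].
Qed.

Lemma pt_period m n : (0 < m)%nat -> vx m (n + m) = vx m n /\ vy m (n + m) = vy m n.
Proof.
  intros Hm. assert (0 < INR m) by (apply lt_0_INR; auto).
  assert (E : 2*PI*INR (n+m)/INR m = 2*PI*INR n/INR m + 2 * INR 1 * PI).
  { rewrite plus_INR. simpl. field. lra. }
  unfold vx, vy. rewrite E, cos_period, sin_period. auto.
Qed.

Lemma cr_affine2 ax ay bx by_ cx cy dx dy u :
  cr ax ay ((1-u)*bx + u*cx) ((1-u)*by_ + u*cy) dx dy = (1-u) * cr ax ay bx by_ dx dy + u * cr ax ay cx cy dx dy.
Proof. unfold cr. ring. Qed.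
Lemma cr_affine3 ax ay bx by_ cx cy dx dy u :
  cr ax ay bx by_ ((1-u)*cx + u*dx) ((1-u)*cy + u*dy) = (1-u) * cr ax ay bx by_ cx cy + u * cr ax ay bx by_ dx dy.
Proof. unfold cr. ring. Qed.
Lemma cr_rot ax ay bx by_ cx cy : cr ax ay bx by_ cx cy = cr bx by_ cx cy ax ay.
Proof. unfold cr. ring. Qed.
Lemma cr_swap ax ay bx by_ cx cy : cr ax ay bx by_ cx cy = - cr ax ay cx cy bx by_.
Proof. unfold cr. ring. Qed.
Lemma cr_same ax ay bx by_ : cr ax ay bx by_ bx by_ = 0.
Proof. unfold cr. ring. Qed.
Lemma cr_same1 ax ay bx by_ : cr ax ay bx by_ ax ay = 0.
Proof. unfold cr. ring. Qed.
Section Sign.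
Variables (m I J : nat) (t : R).
Hypothesis Hm : (0 < m)%nat.
Hypothesis HIJ : (I < J)%nat.
Hypothesis HJ : (J + 1 < I + m)%nat.
Hypothesis Ht : 0 < t < 1.
Definition Px := (1-t) * vx m J + t * vx m (J+1).
Definition Py := (1-t) * vy m J + t * vy m (J+1).
Definition phi (X Y : R) := cr (vx m I) (vy m I) Px Py X Y.

Lemma phi_exp X Y : phi X Y = (1-t) * cr (vx m I) (vy m I) (vx m J) (vy m J) X Y + t * cr (vx m I) (vy m I) (vx m (J+1)) (vy m (J+1)) X Y.
Proof. unfold phi, Px, Py. apply cr_affine2. Qed.

Lemma phi_v_neg n : (I < n)%nat -> (n <= J)%nat -> phi (vx m n) (vy m n) < 0.
Proof.
  intros H1 H2. rewrite phi_exp.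
  assert (K2 : cr (vx m I) (vy m I) (vx m (J+1)) (vy m (J+1)) (vx m n) (vy m n) < 0).
  { rewrite cr_swap. assert (0 < cr (vx m I) (vy m I) (vx m n) (vy m n) (vx m (J+1)) (vy m (J+1))) by (apply pt_pos; lia). lra. }
  assert (K1 : cr (vx m I) (vy m I) (vx m J) (vy m J) (vx m n) (vy m n) <= 0).
  { destruct (Nat.eq_dec n J) as [->|Hn]; [rewrite cr_same; lra|].
    rewrite cr_swap. assert (0 < cr (vx m I) (vy m I) (vx m n) (vy m n) (vx m J) (vy m J)) by (apply pt_pos; lia). lra. }
  nra.
Qed.

Lemma phi_v_pos n : (J < n)%nat -> (n < I + m)%nat -> 0 < phi (vx m n) (vy m n).
Proof.
  intros H1 H2. rewrite phi_exp.
  assert (K1 : 0 < cr (vx m I) (vy m I) (vx m J) (vy m J) (vx m n) (vy m n)) by (apply pt_pos; lia).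
  assert (K2 : 0 <= cr (vx m I) (vy m I) (vx m (J+1)) (vy m (J+1)) (vx m n) (vy m n)).
  { destruct (Nat.eq_dec n (J+1)) as [->|Hn]; [rewrite cr_same; lra|].
    assert (0 < cr (vx m I) (vy m I) (vx m (J+1)) (vy m (J+1)) (vx m n) (vy m n)) by (apply pt_pos; lia). lra. }
  nra.
Qed.

Lemma phi_v_I : phi (vx m I) (vy m I) = 0.
Proof. unfold phi. apply cr_same1. Qed.

Lemma phi_v_Im : phi (vx m (I+m)) (vy m (I+m)) = 0.
Proof. destruct (pt_period m I Hm) as [E1 E2]. rewrite E1, E2. apply phi_v_I. Qed.

Lemma phi_v_le n : (I <= n)%nat -> (n <= J)%nat -> phi (vx m n) (vy m n) <= 0.
Proof.
  intros. destruct (Nat.eq_dec n I) as [->|]; [rewrite phi_v_I; lra|]. left. apply phi_v_neg; lia.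
Qed.

Lemma phi_v_ge n : (J < n)%nat -> (n <= I + m)%nat -> 0 <= phi (vx m n) (vy m n).
Proof.
  intros. destruct (Nat.eq_dec n (I+m)) as [->|]; [rewrite phi_v_Im; lra|]. left. apply phi_v_pos; lia.
Qed.

Lemma phi_same u : phi ((1-u) * vx m J + u * vx m (J+1)) ((1-u) * vy m J + u * vy m (J+1)) =
  (u - t) * cr (vx m I) (vy m I) (vx m J) (vy m J) (vx m (J+1)) (vy m (J+1)).
Proof. unfold phi, Px, Py, cr. ring. Qed.

Lemma crIJ : 0 < cr (vx m I) (vy m I) (vx m J) (vy m J) (vx m (J+1)) (vy m (J+1)).
Proof. apply pt_pos; lia. Qed.

Lemma phi_x_neg L u : 0 <= u < 1 ->
  ((I <= L)%nat /\ (L < J)%nat /\ ((I < L)%nat \/ 0 < u)) \/ (L = J /\ u < t) ->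
  phi ((1-u) * vx m L + u * vx m (L+1)) ((1-u) * vy m L + u * vy m (L+1)) < 0.
Proof.
  intros Hu [(H1 & H2 & H3)|[-> H]].
  - unfold phi. rewrite cr_affine3. fold (phi (vx m L) (vy m L)). fold (phi (vx m (L+1)) (vy m (L+1))).
    assert (K2 : phi (vx m (L+1)) (vy m (L+1)) < 0) by (apply phi_v_neg; lia).
    destruct H3 as [H3|H3].
    + assert (phi (vx m L) (vy m L) < 0) by (apply phi_v_neg; lia). nra.
    + assert (phi (vx m L) (vy m L) <= 0) by (apply phi_v_le; lia). nra.
  - rewrite phi_same. assert (K := crIJ). nra.
Qed.

Lemma phi_x_pos L u : 0 <= u < 1 ->
  ((J < L)%nat /\ (L < I + m)%nat) \/ (L = J /\ t < u) ->
  0 < phi ((1-u) * vx m L + u * vx m (L+1)) ((1-u) * vy m L + u * vy m (L+1)).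
Proof.
  intros Hu [(H1 & H2)|[-> H]].
  - unfold phi. rewrite cr_affine3. fold (phi (vx m L) (vy m L)). fold (phi (vx m (L+1)) (vy m (L+1))).
    assert (phi (vx m L) (vy m L) > 0) by (apply phi_v_pos; lia).
    assert (0 <= phi (vx m (L+1)) (vy m (L+1))) by (apply phi_v_ge; lia). nra.
  - rewrite phi_same. assert (K := crIJ). nra.
Qed.
End Sign.
Lemma frac01 n d : n * (n - d) <= 0 -> d <> 0 -> 0 <= n / d <= 1.
Proof.
  intros H Hd. unfold Rdiv.
  destruct (Rlt_or_le 0 d) as [Hp|Hn].
  - assert (0 < / d) by (apply Rinv_0_lt_compat; auto).
    assert (d * / d = 1) by (field; auto).
    assert (0 <= n <= d) by nra. split; nra.
  - assert (d < 0) by lra.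
    assert (/ d < 0) by (apply Rinv_lt_0_compat; auto).
    assert (d * / d = 1) by (field; auto).
    assert (d <= n <= 0) by nra. split; nra.
Qed.

Lemma seg_inter ax ay px py bx by_ qx qy :
  cr ax ay px py bx by_ * cr ax ay px py qx qy < 0 ->
  cr bx by_ qx qy ax ay * cr bx by_ qx qy px py < 0 ->
  exists X Y, on_seg ax ay px py X Y /\ on_seg bx by_ qx qy X Y.
Proof.
  intros H1 H2.
  set (D := (px - ax) * (qy - by_) - (py - ay) * (qx - bx)).
  set (s1 := cr ax ay px py bx by_). set (s2 := cr bx by_ qx qy ax ay).
  assert (E1 : cr ax ay px py qx qy = s1 + D) by (unfold s1, D, cr; ring).
  assert (E2 : cr bx by_ qx qy px py = s2 - D) by (unfold s2, D, cr; ring).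
  rewrite E1 in H1. rewrite E2 in H2. fold s1 in H1. fold s2 in H2.
  assert (HD : D <> 0) by (intro Z; rewrite Z in H1; nra).
  set (mu := s2 / D). set (la := - s1 / D).
  exists (ax + mu * (px - ax)), (ay + mu * (py - ay)). split.
  - exists mu. split; [apply frac01; auto; nra|]. split; reflexivity.
  - exists la. split; [apply frac01; auto; nra|].
    unfold la, mu, s1, s2, D, cr. split; field; fold D; auto.
Qed.
Lemma pt_unr m i n : (0 < m)%nat -> vx m (unr m i n) = vx m n /\ vy m (unr m i n) = vy m n.
Proof. intros. unfold unr. destruct (Nat.leb_spec i n); auto. apply pt_period; auto. Qed.

Lemma pt_unr_succ m i l : (0 < m)%nat -> (i < m)%nat -> (l < m)%nat ->
  vx m (unr m i l + 1) = vx m (succ_mod m l) /\ vy m (unr m i l + 1) = vy m (succ_mod m l).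
Proof.
  intros. unfold succ_mod, unr. destruct (Nat.leb_spec i l).
  - destruct (Nat.lt_ge_cases (S l) m).
    + rewrite Nat.mod_small by auto. replace (l+1)%nat with (S l) by lia. auto.
    + assert (Esl : S l = m) by lia. replace (S l mod m)%nat with 0%nat by (rewrite Esl; symmetry; apply Nat.Div0.mod_same).
      replace (l+1)%nat with (0 + m)%nat by lia.
      apply pt_period; auto.
  - rewrite Nat.mod_small by lia. replace (l + m + 1)%nat with (S l + m)%nat by lia. apply pt_period; auto.
Qed.

Definition Rltb (x y : R) : bool := if Rlt_dec x y then true else false.
Lemma Rltb_iff x y : Rltb x y = true <-> x < y.
Proof. unfold Rltb. destruct (Rlt_dec x y); split; intros; auto; try discriminate; contradiction. Qed.

Definition rank (A : list arrow) (b : arrow) : nat :=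
  length (filter (fun c => (Nat.eqb (a_edge c) (a_edge b)) && Rltb (a_par c) (a_par b)) A).

Lemma rank_lt A b : (rank A b < S (length A))%nat.
Proof. unfold rank. assert (forall T (f : T -> bool) l, (length (filter f l) <= length l)%nat).
  { intros T f l. induction l as [|h l IH]; simpl; [lia|destruct (f h); simpl; lia]. }
  specialize (H arrow (fun c => (Nat.eqb (a_edge c) (a_edge b)) && Rltb (a_par c) (a_par b)) A). lia. Qed.

Lemma rank_mono A b c : In c A -> a_edge b = a_edge c -> a_par c < a_par b -> (rank A c < rank A b)%nat.
Proof.
  intros Hc He Hp. unfold rank. apply filter_len_lt.
  - intros d _ Hd. apply andb_true_iff in Hd as [E1 E2]. apply andb_true_iff. split.
    + apply Nat.eqb_eq in E1. apply Nat.eqb_eq. congruence.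
    + apply Rltb_iff in E2. apply Rltb_iff. lra.
  - exists c. split; auto. split.
    + apply andb_true_iff. split; [apply Nat.eqb_eq; auto|apply Rltb_iff; auto].
    + apply andb_false_iff. right. unfold Rltb. destruct (Rlt_dec (a_par c) (a_par c)); auto. lra.
Qed.

Lemma rank_par_lt A b c : In b A -> In c A -> a_edge b = a_edge c -> (rank A c < rank A b)%nat -> a_par c < a_par b.
Proof.
  intros Hb Hc He Hr. destruct (Rlt_or_le (a_par c) (a_par b)) as [|H]; auto. exfalso.
  destruct (Rle_lt_or_eq_dec _ _ H) as [H'|H'].
  - assert (rank A b < rank A c)%nat by (apply rank_mono; auto). lia.
  - assert (rank A b = rank A c).
    { unfold rank. rewrite He, H'. reflexivity. }
    lia.
Qed.

Lemma rank_par_eq A b c : In b A -> In c A -> a_edge b = a_edge c -> rank A c = rank A b -> a_par c = a_par b.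
Proof.
  intros Hb Hc He Hr. destruct (Rtotal_order (a_par c) (a_par b)) as [H|[H|H]]; auto.
  - assert (rank A c < rank A b)%nat by (apply rank_mono; auto). lia.
  - assert (rank A b < rank A c)%nat by (apply rank_mono; auto). lia.
Qed.

Lemma exit_unr m i c : (0 < m)%nat -> (i < m)%nat -> (a_edge c < m)%nat ->
  exit_x m c = (1 - a_par c) * vx m (unr m i (a_edge c)) + a_par c * vx m (unr m i (a_edge c) + 1) /\
  exit_y m c = (1 - a_par c) * vy m (unr m i (a_edge c)) + a_par c * vy m (unr m i (a_edge c) + 1).
Proof.
  intros. destruct (pt_unr m i (a_edge c) H) as [E1 E2]. destruct (pt_unr_succ m i (a_edge c) H H0 H1) as [E3 E4].
  rewrite E1, E2, E3, E4. unfold exit_x, exit_y. split; ring.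
Qed.

Lemma J_bound m a : (0 < m)%nat -> valid_arrow m a ->
  (a_src a < unr m (a_src a) (a_edge a))%nat /\ (unr m (a_src a) (a_edge a) + 1 < a_src a + m)%nat.
Proof.
  intros Hm (H1 & H2 & H3 & H4 & H5). rewrite (succ_mod_eq m) in H5 by auto.
  unfold unr. destruct (Nat.leb_spec (a_src a) (a_edge a)); destruct (Nat.ltb_spec (S (a_edge a)) m); lia.
Qed.
Section Final.
Variables (m : nat) (A : list arrow).
Hypothesis Hm4 : (4 <= m)%nat.
Hypothesis HSt : is_star m A.
Hypothesis Hfcf : fan_crossing_free m A.

Definition Qv : nat := S (length A).
Lemma HQ : (1 <= Qv)%nat. Proof. unfold Qv. lia. Qed.
Lemma Hm0 : (0 < m)%nat. Proof. lia. Qed.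
Definition emb (b : arrow) : nat * nat := (vpos Qv (a_src b), xpos Qv (a_edge b) (rank A b)).
Lemma rkQ b : (rank A b < Qv)%nat. Proof. apply rank_lt. Qed.

Lemma valid_of b : In b A -> valid_arrow m b.
Proof. intros. destruct HSt as [_ H']. rewrite Forall_forall in H'. auto. Qed.

Definition cra (a : arrow) (X Y : R) := cr (vx m (a_src a)) (vy m (a_src a)) (exit_x m a) (exit_y m a) X Y.

Lemma cra_phi a X Y : valid_arrow m a ->
  cra a X Y = phi m (a_src a) (unr m (a_src a) (a_edge a)) (a_par a) X Y.
Proof.
  intros (H1 & H2 & _). unfold cra, phi, Px, Py.
  destruct (exit_unr m (a_src a) a Hm0 H1 H2) as [E1 E2]. rewrite E1, E2. reflexivity.
Qed.

Ltac sgn_setup a :=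
  let Va := fresh "Va" in
  assert (Va := valid_of a ltac:(assumption));
  destruct (J_bound m a Hm0 Va) as [?J1 ?J2];
  rewrite (cra_phi a _ _ Va);
  destruct Va as (?V1 & ?V2 & ?V3 & ?V4 & ?V5).

Lemma sgn_v_neg a k : In a A -> (k < m)%nat -> k <> a_src a ->
  btw (vpos Qv (a_src a)) (vpos Qv k) (xpos Qv (a_edge a) (rank A a)) -> cra a (vx m k) (vy m k) < 0.
Proof.
  intros Ha Hk Hne Hb. sgn_setup a.
  destruct (CV1 m Qv Hm4 HQ _ _ _ _ V1 Hk V2 (rkQ a) Hne Hb) as [K1 K2].
  destruct (pt_unr m (a_src a) k Hm0) as [E1 E2]. rewrite <- E1, <- E2.
  apply (phi_v_neg m (a_src a) (unr m (a_src a) (a_edge a)) (a_par a) Hm0 J1 ltac:(lia) ltac:(lra)); lia.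
Qed.

Lemma sgn_v_pos a k : In a A -> (k < m)%nat ->
  btw (xpos Qv (a_edge a) (rank A a)) (vpos Qv k) (vpos Qv (a_src a)) -> 0 < cra a (vx m k) (vy m k).
Proof.
  intros Ha Hk Hb. sgn_setup a.
  destruct (CV2 m Qv Hm4 HQ _ _ _ _ V1 Hk V2 (rkQ a) Hb) as [K1 K2].
  destruct (pt_unr m (a_src a) k Hm0) as [E1 E2]. rewrite <- E1, <- E2.
  apply (phi_v_pos m (a_src a) (unr m (a_src a) (a_edge a)) (a_par a) Hm0 J1 ltac:(lia) ltac:(lra)); lia.
Qed.

Lemma sgn_x_neg a c : In a A -> In c A ->
  btw (vpos Qv (a_src a)) (xpos Qv (a_edge c) (rank A c)) (xpos Qv (a_edge a) (rank A a)) ->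
  cra a (exit_x m c) (exit_y m c) < 0.
Proof.
  intros Ha Hc Hb. assert (Vc := valid_of c Hc). destruct Vc as (W1 & W2 & W3 & _).
  sgn_setup a.
  destruct (exit_unr m (a_src a) c Hm0 V1 W2) as [E1 E2]. rewrite E1, E2.
  destruct (CX1 m Qv Hm4 HQ _ _ _ _ _ V1 W2 V2 (rkQ a) (rkQ c) Hb) as [[K1 K2]|[K1 K2]].
  - apply (phi_x_neg m (a_src a) (unr m (a_src a) (a_edge a)) (a_par a) Hm0 J1 ltac:(lia) ltac:(lra)); [lra|].
    left. split; [lia|split; [lia|right; lra]].
  - apply (phi_x_neg m (a_src a) (unr m (a_src a) (a_edge a)) (a_par a) Hm0 J1 ltac:(lia) ltac:(lra)); [lra|].
    right. split; [rewrite K1; auto|]. apply (rank_par_lt A a c); auto.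
Qed.

Lemma sgn_x_pos a c : In a A -> In c A ->
  btw (xpos Qv (a_edge a) (rank A a)) (xpos Qv (a_edge c) (rank A c)) (vpos Qv (a_src a)) ->
  0 < cra a (exit_x m c) (exit_y m c).
Proof.
  intros Ha Hc Hb. assert (Vc := valid_of c Hc). destruct Vc as (W1 & W2 & W3 & _).
  sgn_setup a.
  destruct (exit_unr m (a_src a) c Hm0 V1 W2) as [E1 E2]. rewrite E1, E2.
  destruct (CX2 m Qv Hm4 HQ _ _ _ _ _ V1 W2 V2 (rkQ a) (rkQ c) Hb) as [[K1 K2]|[K1 K2]].
  - apply (phi_x_pos m (a_src a) (unr m (a_src a) (a_edge a)) (a_par a) Hm0 J1 ltac:(lia) ltac:(lra)); [lra|]. left. lia.
  - apply (phi_x_pos m (a_src a) (unr m (a_src a) (a_edge a)) (a_par a) Hm0 J1 ltac:(lia) ltac:(lra)); [lra|].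
    right. split; [rewrite K1; auto|]. apply (rank_par_lt A c a); auto.
Qed.
Lemma sign_pair b c : In b A -> In c A -> inter (emb b) (emb c) -> snd (emb b) <> snd (emb c) ->
  cra b (vx m (a_src c)) (vy m (a_src c)) * cra b (exit_x m c) (exit_y m c) < 0 /\ a_src b <> a_src c.
Proof.
  intros Hb Hc Hi Hs. assert (Vc := valid_of c Hc). destruct Vc as (W1 & _).
  unfold inter, emb in *; simpl in *.
  destruct Hi as [E|[[H1 H2]|[H1 H2]]]; [contradiction| |].
  - assert (Hne : a_src c <> a_src b) by (intro E; rewrite E in H1; clear - H1; unfold btw in H1; lia).
    assert (K1 := sgn_v_neg b (a_src c) Hb W1 Hne H1).
    assert (K2 := sgn_x_pos b c Hb Hc H2).
    split; [nra|auto].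
  - assert (Hne : a_src c <> a_src b) by (intro E; rewrite E in H2; clear - H2; unfold btw in H2; lia).
    assert (K1 := sgn_x_neg b c Hb Hc H1).
    assert (K2 := sgn_v_pos b (a_src c) Hb W1 H2).
    split; [nra|auto].
Qed.

Lemma arrow_eq (b c : arrow) : a_src b = a_src c -> a_edge b = a_edge c -> a_par b = a_par c -> b = c.
Proof. destruct b, c; simpl; intros; subst; auto. Qed.

Lemma on_seg_end ax ay bx by_ : on_seg ax ay bx by_ bx by_.
Proof. exists 1. split; [lra|split; ring]. Qed.

Lemma inter_geo b c : In b A -> In c A -> b <> c -> inter (emb b) (emb c) -> intersects m (Arr b) (Arr c).
Proof.
  intros Hb Hc Hne Hi.
  assert (Hneq : Arr b <> Arr c) by (intro E; injection E; auto).
  destruct (classic (snd (emb b) = snd (emb c))) as [E|E].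
  - unfold emb in E; simpl in E. destruct (xx_eq Qv _ _ _ _ (rkQ b) (rkQ c) E) as [E1 E2].
    assert (Ep : a_par c = a_par b) by (apply (rank_par_eq A b c); auto; congruence).
    assert (Ex : exit_x m c = exit_x m b /\ exit_y m c = exit_y m b) by (unfold exit_x, exit_y; rewrite E1, Ep; auto).
    split; auto. exists (exit_x m b), (exit_y m b). split; [|split].
    + apply on_seg_end.
    + simpl. destruct Ex as [-> ->]. apply on_seg_end.
    + intros [v (_ & _ & _ & I1 & I2)]. simpl in I1, I2. apply Hne. apply arrow_eq; auto; congruence.
  - destruct (sign_pair b c Hb Hc Hi E) as [P1 Hs].
    destruct (sign_pair c b Hc Hb (inter_sym _ _ Hi) (not_eq_sym E)) as [P2 _].
    unfold cra in P1, P2.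
    destruct (seg_inter _ _ _ _ _ _ _ _ P1 P2) as [X [Y [S1 S2]]].
    split; auto. exists X, Y. split; [exact S1|split; [exact S2|]].
    intros [v (_ & _ & _ & I1 & I2)]. simpl in I1, I2. apply Hs. congruence.
Qed.

Lemma ae_inter b : In b A -> intersects m (Arr b) (Edge (a_edge b)).
Proof.
  intros Hb. destruct (valid_of b Hb) as (V1 & V2 & V3 & V4 & V5).
  split; [discriminate|]. exists (exit_x m b), (exit_y m b). split; [|split].
  - apply on_seg_end.
  - simpl. exists (a_par b). split; [lra|]. unfold exit_x, exit_y. split; reflexivity.
  - intros [v (_ & _ & _ & I1 & I2)]. simpl in I1, I2. destruct I2; congruence.
Qed.

Lemma intersects_sym X Y : intersects m X Y -> intersects m Y X.
Proof.
  intros [Hne [px [py (H1 & H2 & H3)]]]. split; auto. exists px, py. split; auto. split; auto.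
  intros [v (Hv & E1 & E2 & I1 & I2)]. apply H3. exists v. auto.
Qed.

Lemma viol X Y Z v : is_elem m A X -> is_elem m A Y -> is_elem m A Z -> Y <> Z -> (v < m)%nat ->
  incident m Y v -> incident m Z v -> intersects m X Y -> intersects m X Z -> False.
Proof. intros. apply (Hfcf X Y Z v); auto. Qed.

Definition Vabs := map (vpos Qv) (seq 0 m).
Definition Aabs := map emb A.

Lemma inV k : (k < m)%nat -> In (vpos Qv k) Vabs.
Proof. intros. unfold Vabs. apply in_map. apply in_seq. lia. Qed.

Lemma emb_inj b c : In b A -> In c A -> emb b = emb c -> b = c.
Proof.
  intros Hb Hc E. unfold emb in E. injection E as E1 E2.
  apply vv_eq in E1; [|apply HQ]. destruct (xx_eq Qv _ _ _ _ (rkQ b) (rkQ c) E2) as [E3 E4].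
  apply arrow_eq; auto. symmetry. apply (rank_par_eq A b c); auto; congruence.
Qed.

Lemma Star_abs : Star Vabs Aabs.
Proof.
  unfold Star. refine (conj _ (conj _ (conj _ (conj _ (conj _ (conj _ _)))))).
  - unfold Vabs. apply NoDup_map_inj_on; [|apply seq_NoDup]. intros. apply vv_eq in H1; auto. apply HQ.
  - unfold Aabs. apply NoDup_map_inj_on; [|destruct HSt; auto]. intros. apply emb_inj; auto.
  - intros b' Hb'. unfold Aabs in Hb'. apply in_map_iff in Hb' as [b [<- Hb]].
    destruct (valid_of b Hb) as (V1 & V2 & _). unfold emb; simpl. split; [|split].
    + apply inV; auto.
    + unfold xpos. lia.
    + unfold Vabs. intros Hm'. apply in_map_iff in Hm' as [k [E _]]. apply (vx_neq Qv k _ _ E).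
  - intros b' c' Hb' Hc'. unfold Aabs in *. apply in_map_iff in Hb' as [b [<- Hb]]. apply in_map_iff in Hc' as [c [<- Hc]].
    unfold emb; simpl. apply xx_sp; apply rkQ.
  - intros b' c' Hb' Hc' Hne Hf. unfold Aabs in *. apply in_map_iff in Hb' as [b [<- Hb]]. apply in_map_iff in Hc' as [c [<- Hc]].
    assert (Hbc : b <> c) by (intro; subst; auto).
    unfold emb in Hf; simpl in Hf. apply vv_eq in Hf; [|apply HQ].
    destruct (valid_of b Hb) as (V1 & V2 & _). destruct (valid_of c Hc) as (U1 & U2 & _).
    destruct (Nat.eq_dec (a_edge b) (a_edge c)) as [Ee|Ee].
    + exfalso. apply (viol (Edge (a_edge b)) (Arr b) (Arr c) (a_src b)); simpl; auto.
      all: try (intro E; injection E; auto; fail); try (apply intersects_sym, ae_inter; auto; fail).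
      apply intersects_sym. rewrite Ee. apply ae_inter; auto.
    + unfold emb; simpl. apply (cnt_pos _ _ _ (vpos Qv (succ_mod m (a_edge b)))).
      * apply inV. apply (succ_lt m Qv Hm4 HQ); auto.
      * apply (W3 m Qv Hm4 HQ); auto; try apply rkQ; apply HQ.
  - intros b' c' Hb' Hc' Hne Hi. unfold Aabs in *. apply in_map_iff in Hb' as [b [<- Hb]]. apply in_map_iff in Hc' as [c [<- Hc]].
    assert (Hbc : b <> c) by (intro; subst; auto).
    assert (Ig := inter_geo b c Hb Hc Hbc Hi).
    destruct (valid_of b Hb) as (V1 & V2 & _). destruct (valid_of c Hc) as (U1 & U2 & _).
    destruct (classic (a_src c = a_edge b \/ a_src c = succ_mod m (a_edge b))) as [Hv|Hv].
    + exfalso. apply (viol (Arr b) (Edge (a_edge b)) (Arr c) (a_src c)); simpl; auto.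
      all: try discriminate; try (apply ae_inter; auto).
    + unfold emb; simpl. split.
      * apply (cnt_pos _ _ _ (vpos Qv (succ_mod m (a_edge b)))).
        -- apply inV. apply (succ_lt m Qv Hm4 HQ); auto.
        -- apply (W1 m Qv Hm4 HQ); auto; try apply rkQ; try apply HQ; try (intro E; apply Hv; auto).
      * apply (cnt_pos _ _ _ (vpos Qv (a_edge b))).
        -- apply inV; auto.
        -- apply (W2 m Qv Hm4 HQ); auto; try apply rkQ; try apply HQ; try (intro E; apply Hv; auto).
  - intros b' c' d' Hb' Hc' Hd' H1 H2 H3 Hf Hi1 Hi2. unfold Aabs in *.
    apply in_map_iff in Hb' as [b [<- Hb]]. apply in_map_iff in Hc' as [c [<- Hc]]. apply in_map_iff in Hd' as [d [<- Hd]].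
    assert (Hbc : b <> c) by (intro; subst; auto). assert (Hbd : b <> d) by (intro; subst; auto).
    assert (Hcd : c <> d) by (intro; subst; auto).
    unfold emb in Hf; simpl in Hf. apply vv_eq in Hf; [|apply HQ].
    destruct (valid_of c Hc) as (U1 & _).
    apply (viol (Arr b) (Arr c) (Arr d) (a_src c)); simpl; auto.
    all: try (intro E; injection E; auto; fail); try (apply inter_geo; auto; fail).
Qed.

Lemma d_eq i j : (i < m)%nat -> (j < m)%nat -> ((j + m - i) mod m = if (i <=? j)%nat then j - i else j + m - i)%nat.
Proof.
  intros. destruct (Nat.leb_spec i j).
  - replace (j + m - i)%nat with ((j - i) + 1 * m)%nat by lia. rewrite Nat.Div0.mod_add. apply Nat.mod_small. lia.
  - apply Nat.mod_small. lia.
Qed.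

Lemma long_facts b : In b A -> is_long m b = true ->
  pred_m m (a_edge b) <> a_src b /\ succ_mod m (succ_mod m (a_edge b)) <> a_src b.
Proof.
  intros Hb L. destruct (valid_of b Hb) as (V1 & V2 & V3 & V4 & V5).
  unfold is_long, arrow_length in L. apply Nat.ltb_lt in L. rewrite d_eq in L by auto.
  assert (Hs := succ_lt m Qv Hm4 HQ (a_edge b) V2).
  rewrite (succ_mod_eq m (succ_mod m (a_edge b))) by auto.
  rewrite (succ_mod_eq m (a_edge b)) in * by auto. unfold pred_m.
  revert L V5 Hs. destruct (Nat.leb_spec (a_src b) (a_edge b)); destruct (Nat.ltb_spec (S (a_edge b)) m);
  try destruct (Nat.ltb_spec (S (S (a_edge b))) m); try destruct (Nat.ltb_spec 1 m);
  destruct (Nat.eqb_spec (a_edge b) 0); intros; lia.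
Qed.

Lemma long_abs b : In b A -> is_long m b = true -> longb Vabs (emb b) = true.
Proof.
  intros Hb L. destruct (long_facts b Hb L) as [F1 F2].
  destruct (valid_of b Hb) as (V1 & V2 & V3 & V4 & V5).
  assert (Hs := succ_lt m Qv Hm4 HQ (a_edge b) V2).
  assert (Hss := succ_lt m Qv Hm4 HQ _ Hs).
  assert (Hp := pred_lt m Qv Hm4 HQ (a_edge b) V2).
  apply longb_iff. unfold emb; simpl. split.
  - apply (filter_len_two _ _ (vpos Qv (pred_m m (a_edge b))) (vpos Qv (a_edge b))).
    + apply inV; auto.
    + apply inV; auto.
    + intro E. apply vv_eq in E; [|apply HQ]. revert E. unfold pred_m. destruct (Nat.eqb_spec (a_edge b) 0); lia.
    + apply btwb_iff. apply (LW1 m Qv Hm4 HQ); auto; try apply rkQ; apply HQ.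
    + apply btwb_iff. apply (W2 m Qv Hm4 HQ); auto; try apply rkQ; apply HQ.
  - apply (filter_len_two _ _ (vpos Qv (succ_mod m (a_edge b))) (vpos Qv (succ_mod m (succ_mod m (a_edge b))))).
    + apply inV; auto.
    + apply inV; auto.
    + intro E. apply vv_eq in E; [|apply HQ]. revert E.
      rewrite (succ_mod_eq m (succ_mod m (a_edge b))) by auto. revert Hs.
      rewrite (succ_mod_eq m (a_edge b)) by auto.
      destruct (Nat.ltb_spec (S (a_edge b)) m); intros; try destruct (Nat.ltb_spec 1 m);
      try destruct (Nat.ltb_spec (S (S (a_edge b))) m); lia.
    + apply btwb_iff. apply (W1 m Qv Hm4 HQ); auto; try apply rkQ; try apply HQ.
    + apply btwb_iff. apply (LW2 m Qv Hm4 HQ); auto; try apply rkQ; apply HQ.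
Qed.

Lemma final_bound : (length (filter (is_long m) A) <= 2 * m - 8)%nat.
Proof.
  assert (B := abs_main m Vabs Aabs ltac:(unfold Vabs; rewrite length_map, length_seq; auto) Star_abs).
  assert (length (filter (is_long m) A) <= length (filter (longb Vabs) Aabs))%nat.
  { unfold Aabs. rewrite len_filter_map. apply filter_len_mono. intros b Hb L. apply long_abs; auto. }
  lia.
Qed.
End Final.

Theorem lemma2 (m : nat) (A : list arrow) :
  (4 <= m)%nat -> is_star m A -> fan_crossing_free m A ->
  (length (filter (is_long m) A) <= 2 * m - 8)%nat.
Proof. intros. apply final_bound; auto. Qed.
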